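(* Let $D\subseteq\mathbb{R}^3\setminus\{0\}$ be open, $\Omega=\mathbb{R}^3\times D$, and let $\vec\mu=(\mu_1,\mu_2,\mu_3):\Omega\to\mathbb{R}^3$ be smooth. Then $\Pi_{\vec\mu}$ defines a Poisson bracket on $\Omega$ (i.e. $\{f,g\}_{\vec\mu}=(\nabla f)^T\Pi_{\vec\mu}\nabla g$ satisfies the Jacobi identity) if and only if there is a smooth $\vec\nu:D\times\mathbb{R}\to\mathbb{R}^3$ with $\vec\mu(\vec M,\vec\gamma)=\vec\nu(\vec\gamma,\vec M\cdot\vec\gamma)$ and $\vec\nu$ satisfies the Jacobi condition equation $$\vec\gamma\cdot \operatorname{curl}_{\vec\gamma}\vec\nu(\vec\gamma,s)+\vec\nu(\vec\gamma,s)\cdot\big(\vec\gamma\times \partial_s\vec\nu(\vec\gamma,s)\big)=0\quad\text{for all }(\vec\gamma,s)\in D\times\mathbb{R},$$ where $\operatorname{curl}_{\vec\gamma}$ is the curl with respect to $\vec\gamma$ with $s$ held fixed.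
   Context: Coordinates on $\mathbb{R}^6$ are $(\vec M,\vec\gamma)=(M_1,M_2,M_3,\gamma_1,\gamma_2,\gamma_3)$. For a smooth $\vec\mu=(\mu_1,\mu_2,\mu_3)$ of $(\vec M,\vec\gamma)$, $\Pi_{\vec\mu}$ is the skew-symmetric $6\times6$ matrix $$\Pi_{\vec\mu}=\begin{bmatrix}0&-M_3-\mu_3&M_2+\mu_2&0&-\gamma_3&\gamma_2\\ M_3+\mu_3&0&-M_1-\mu_1&\gamma_3&0&-\gamma_1\\ -M_2-\mu_2&M_1+\mu_1&0&-\gamma_2&\gamma_1&0\\ 0&-\gamma_3&\gamma_2&0&0&0\\ \gamma_3&0&-\gamma_1&0&0&0\\ -\gamma_2&\gamma_1&0&0&0&0\end{bmatrix},$$ and $\{f,g\}_{\vec\mu}=(\nabla f)^T\Pi_{\vec\mu}\nabla g$ for smooth $f,g$ (gradient in all six variables). *)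

(* Defs.v *)
From Stdlib Require Import Reals List Arith ClassicalEpsilon.
Open Scope R_scope.

(** Points of R^n are represented as [Vec := nat -> R]; only the coordinates
    0..n-1 are used (distances, partial derivatives).  Any set that is open in
    the sense of [open_n n] and any function continuous in the sense of
    [cont_on n] automatically ignores coordinates >= n. *)
Definition Vec := nat -> R.

Definition R3 := (R * R * R)%type.
Definition c1 (v : R3) : R := fst (fst v).
Definition c2 (v : R3) : R := snd (fst v).
Definition c3 (v : R3) : R := snd v.
Definition dot3 (a b : R3) : R := c1 a * c1 b + c2 a * c2 b + c3 a * c3 b.
Definition cross3 (a b : R3) : R3 :=
  (c2 a * c3 b - c3 a * c2 b, c3 a * c1 b - c1 a * c3 b, c1 a * c2 b - c2 a * c1 b).
Definition zero3 : R3 := (0, 0, 0).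

Definition sumn (n : nat) (F : nat -> R) : R :=
  fold_right Rplus 0 (map F (seq 0 n)).

Definition distn (n : nat) (x y : Vec) : R := sumn n (fun i => Rabs (x i - y i)).

Definition open_n (n : nat) (U : Vec -> Prop) : Prop :=
  forall x, U x -> exists r, 0 < r /\ forall y, distn n y x < r -> U y.

Definition cont_on (n : nat) (U : Vec -> Prop) (f : Vec -> R) : Prop :=
  forall x, U x -> forall eps, 0 < eps ->
    exists delta, 0 < delta /\
      forall y, U y -> distn n y x < delta -> Rabs (f y - f x) < eps.

Definition upd (x : Vec) (i : nat) (t : R) : Vec :=
  fun j => if Nat.eqb j i then t else x j.

(** i-th partial derivative (its value where it exists; arbitrary elsewhere). *)
Definition pd (i : nat) (f : Vec -> R) (x : Vec) : R :=
  epsilon (inhabits 0)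
    (fun l => derivable_pt_lim (fun t => f (upd x i t)) (x i) l).

Fixpoint iter_pd (l : list nat) (f : Vec -> R) : Vec -> R :=
  match l with
  | nil => f
  | i :: l' => pd i (iter_pd l' f)
  end.

Definition smooth_on (n : nat) (U : Vec -> Prop) (f : Vec -> R) : Prop :=
  forall l : list nat, (forall i, In i l -> (i < n)%nat) ->
    cont_on n U (iter_pd l f) /\
    (forall i x, (i < n)%nat -> U x ->
       exists d, derivable_pt_lim (fun t => iter_pd l f (upd x i t)) (x i) d).

Definition vM (x : Vec) : R3 := (x 0%nat, x 1%nat, x 2%nat).
Definition vG (x : Vec) : R3 := (x 3%nat, x 4%nat, x 5%nat).

Definition pack4 (g : R3) (s : R) : Vec :=
  fun i => match i with
           | 0%nat => c1 g | 1%nat => c2 g | 2%nat => c3 g | 3%nat => s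
           | _ => 0 end.

Definition Omega (D : R3 -> Prop) : Vec -> Prop := fun x => D (vG x).

Definition Pi (mu : R3 -> R3 -> R3) (x : Vec) (i j : nat) : R :=
  let m := mu (vM x) (vG x) in
  let A1 := x 0%nat + c1 m in
  let A2 := x 1%nat + c2 m in
  let A3 := x 2%nat + c3 m in
  let g1 := x 3%nat in let g2 := x 4%nat in let g3 := x 5%nat in
  match i, j with
  | 0%nat, 1%nat => - A3 | 0%nat, 2%nat => A2 | 0%nat, 4%nat => - g3 | 0%nat, 5%nat => g2
  | 1%nat, 0%nat => A3 | 1%nat, 2%nat => - A1 | 1%nat, 3%nat => g3 | 1%nat, 5%nat => - g1
  | 2%nat, 0%nat => - A2 | 2%nat, 1%nat => A1 | 2%nat, 3%nat => - g2 | 2%nat, 4%nat => g1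
  | 3%nat, 1%nat => - g3 | 3%nat, 2%nat => g2
  | 4%nat, 0%nat => g3 | 4%nat, 2%nat => - g1
  | 5%nat, 0%nat => - g2 | 5%nat, 1%nat => g1
  | _, _ => 0
  end.

Definition bracket (mu : R3 -> R3 -> R3) (f g : Vec -> R) : Vec -> R :=
  fun x => sumn 6 (fun i => sumn 6 (fun j => pd i f x * Pi mu x i j * pd j g x)).

Definition is_Poisson (D : R3 -> Prop) (mu : R3 -> R3 -> R3) : Prop :=
  forall f g h : Vec -> R,
    smooth_on 6 (Omega D) f -> smooth_on 6 (Omega D) g -> smooth_on 6 (Omega D) h ->
    forall x, Omega D x ->
      bracket mu f (bracket mu g h) x + bracket mu g (bracket mu h f) x
      + bracket mu h (bracket mu f g) x = 0.

Definition smooth_mu (D : R3 -> Prop) (mu : R3 -> R3 -> R3) : Prop :=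
  smooth_on 6 (Omega D) (fun x => c1 (mu (vM x) (vG x))) /\
  smooth_on 6 (Omega D) (fun x => c2 (mu (vM x) (vG x))) /\
  smooth_on 6 (Omega D) (fun x => c3 (mu (vM x) (vG x))).

Definition DxR (D : R3 -> Prop) : Vec -> Prop :=
  fun y => D (y 0%nat, y 1%nat, y 2%nat).

Definition nu4 (nu : R3 -> R -> R3) (k : nat) : Vec -> R :=
  fun y => let v := nu (y 0%nat, y 1%nat, y 2%nat) (y 3%nat) in
           match k with 0%nat => c1 v | 1%nat => c2 v | _ => c3 v end.

Definition smooth_nu (D : R3 -> Prop) (nu : R3 -> R -> R3) : Prop :=
  smooth_on 4 (DxR D) (nu4 nu 0) /\ smooth_on 4 (DxR D) (nu4 nu 1) /\
  smooth_on 4 (DxR D) (nu4 nu 2).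

Definition curl_g (nu : R3 -> R -> R3) (g : R3) (s : R) : R3 :=
  let y := pack4 g s in
  (pd 1 (nu4 nu 2) y - pd 2 (nu4 nu 1) y,
   pd 2 (nu4 nu 0) y - pd 0 (nu4 nu 2) y,
   pd 0 (nu4 nu 1) y - pd 1 (nu4 nu 0) y).

Definition ds_nu (nu : R3 -> R -> R3) (g : R3) (s : R) : R3 :=
  let y := pack4 g s in
  (pd 3 (nu4 nu 0) y, pd 3 (nu4 nu 1) y, pd 3 (nu4 nu 2) y).

Definition jacobi_condition (D : R3 -> Prop) (nu : R3 -> R -> R3) : Prop :=
  forall (g : R3) (s : R), D g ->
    dot3 g (curl_g nu g s) + dot3 (nu g s) (cross3 g (ds_nu nu g s)) = 0.

(* Main.v *)
Require Import Defs.
From Stdlib Require Import Reals Lra Lia List Arith ClassicalEpsilon FunctionalExtensionality PropExtensionality.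
Require Import Defs.
Open Scope R_scope.

Lemma upd_same x i t : upd x i t i = t.
Proof. unfold upd; now rewrite Nat.eqb_refl. Qed.
Lemma upd_other x i j t : j <> i -> upd x i t j = x j.
Proof. intro H; unfold upd; apply Nat.eqb_neq in H; now rewrite H. Qed.
Lemma upd_upd x i s t : upd (upd x i s) i t = upd x i t.
Proof. apply functional_extensionality; intro j; unfold upd; now destruct (Nat.eqb j i). Qed.
Lemma upd_id x i : upd x i (x i) = x.
Proof. apply functional_extensionality; intro j; unfold upd; destruct (Nat.eqb_spec j i); subst; auto. Qed.
Lemma upd_comm x i k s t : i <> k -> upd (upd x i s) k t = upd (upd x k t) i s.
Proof. intro H; apply functional_extensionality; intro j; unfold upd;
  destruct (Nat.eqb_spec j k); destruct (Nat.eqb_spec j i); subst; auto; lia. Qed.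

Lemma pd_eq f x i l : derivable_pt_lim (fun t => f (upd x i t)) (x i) l -> pd i f x = l.
Proof.
  intro H. unfold pd.
  pose proof (epsilon_spec (inhabits 0) (fun l => derivable_pt_lim (fun t => f (upd x i t)) (x i) l) (ex_intro _ l H)) as H1.
  simpl in H1. eapply uniqueness_limite; eauto.
Qed.

Lemma pd_spec f x i : (exists l, derivable_pt_lim (fun t => f (upd x i t)) (x i) l) ->
  derivable_pt_lim (fun t => f (upd x i t)) (x i) (pd i f x).
Proof. intros [l H]. now rewrite (pd_eq _ _ _ _ H). Qed.

Lemma dpl_local f g t0 l r : 0 < r -> (forall t, Rabs (t - t0) < r -> f t = g t) ->
  derivable_pt_lim f t0 l -> derivable_pt_lim g t0 l.
Proof.
  intros Hr Hfg H eps He. destruct (H eps He) as [d Hd].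
  assert (Hm : 0 < Rmin d r) by (apply Rmin_pos; [apply cond_pos|lra]).
  exists (mkposreal _ Hm). intros h Hh Hh2. simpl in Hh2.
  assert (E1 : f (t0 + h) = g (t0 + h)).
  { apply Hfg. replace (t0 + h - t0) with h by ring. eapply Rlt_le_trans; eauto; apply Rmin_r. }
  assert (E2 : f t0 = g t0).
  { apply Hfg. replace (t0 - t0) with 0 by ring. rewrite Rabs_R0; lra. }
  rewrite <- E1, <- E2. apply Hd; auto. eapply Rlt_le_trans; eauto; apply Rmin_l.
Qed.

Lemma sumn_S n F : sumn (S n) F = sumn n F + F n.
Proof.
  unfold sumn. rewrite seq_S, map_app, fold_right_app. simpl.
  generalize (map F (seq 0 n)). intro l. induction l as [|a l IH]; simpl; [ring| rewrite IH; ring].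
Qed.
Lemma sumn_0 F : sumn 0 F = 0.
Proof. reflexivity. Qed.
Lemma sumn_ext n F G : (forall i, (i < n)%nat -> F i = G i) -> sumn n F = sumn n G.
Proof. induction n; intros H; [reflexivity|]. rewrite !sumn_S, IHn, H; auto; intros; apply H; lia. Qed.
Lemma sumn_plus n F G : sumn n (fun i => F i + G i) = sumn n F + sumn n G.
Proof. induction n; [rewrite ?sumn_0; ring|]. rewrite !sumn_S, IHn; ring. Qed.
Lemma sumn_scal n c F : sumn n (fun i => c * F i) = c * sumn n F.
Proof. induction n; [rewrite ?sumn_0; ring|]. rewrite !sumn_S, IHn; ring. Qed.
Lemma sumn_scal_r n c F : sumn n (fun i => F i * c) = sumn n F * c.
Proof. induction n; [rewrite ?sumn_0; ring|]. rewrite !sumn_S, IHn; ring. Qed.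
Lemma sumn_zero n F : (forall i, (i < n)%nat -> F i = 0) -> sumn n F = 0.
Proof. intro H; rewrite (sumn_ext n F (fun _ => 0)); auto. clear H.
  induction n; [apply sumn_0|]. rewrite sumn_S, IHn; ring. Qed.
Lemma sumn_swap n m F : sumn n (fun i => sumn m (fun j => F i j)) = sumn m (fun j => sumn n (fun i => F i j)).
Proof.
  induction n; [rewrite sumn_0; symmetry; apply sumn_zero; intros; apply sumn_0|].
  rewrite sumn_S, IHn, <- sumn_plus. apply sumn_ext; intros; now rewrite sumn_S.
Qed.
Lemma sumn_opp n F : sumn n (fun i => - F i) = - sumn n F.
Proof. induction n; [rewrite ?sumn_0; ring|]. rewrite !sumn_S, IHn; ring. Qed.
Lemma sumn_delta n a F : (a < n)%nat -> sumn n (fun d => (if Nat.eqb d a then 1 else 0) * F d) = F a.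
Proof.
  induction n; intros H; [lia|]. rewrite sumn_S. destruct (Nat.eqb_spec n a).
  - subst. rewrite sumn_zero. ring. intros i Hi. destruct (Nat.eqb_spec i a); [lia|ring].
  - rewrite IHn by lia. ring.
Qed.
Lemma sumn_abs n F : Rabs (sumn n F) <= sumn n (fun i => Rabs (F i)).
Proof. induction n; [rewrite !sumn_0, Rabs_R0; lra|]. rewrite !sumn_S.
  eapply Rle_trans; [apply Rabs_triang|]. lra. Qed.
Lemma sumn_le n F G : (forall i, (i<n)%nat -> F i <= G i) -> sumn n F <= sumn n G.
Proof. induction n; intros H; [rewrite !sumn_0; lra|]. rewrite !sumn_S. pose proof (H n ltac:(lia)).
  pose proof (IHn ltac:(intros; apply H; lia)). lra. Qed.
Lemma sumn_nonneg n F : (forall i, (i<n)%nat -> 0 <= F i) -> 0 <= sumn n F.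
Proof. intro H. pose proof (sumn_le n (fun _ => 0) F H). rewrite sumn_zero in H0; auto. Qed.
Lemma sumn_term_le n F i : (forall j, (j<n)%nat -> 0 <= F j) -> (i < n)%nat -> F i <= sumn n F.
Proof. induction n; intros H Hi; [lia|]. rewrite sumn_S. destruct (Nat.eq_dec i n).
  - subst. pose proof (sumn_nonneg n F ltac:(intros; apply H; lia)); lra.
  - pose proof (IHn ltac:(intros; apply H; lia) ltac:(lia)). pose proof (H n ltac:(lia)); lra. Qed.

Lemma distn_nonneg n x y : 0 <= distn n x y.
Proof. apply sumn_nonneg; intros; apply Rabs_pos. Qed.
Lemma distn_coord n x y i : (i < n)%nat -> Rabs (x i - y i) <= distn n x y.
Proof. intros; unfold distn; apply (sumn_term_le n (fun i => Rabs (x i - y i))); auto; intros; apply Rabs_pos. Qed.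
Lemma distn_upd n x i t : distn n (upd x i t) x <= Rabs (t - x i).
Proof.
  unfold distn. induction n; [rewrite sumn_0; apply Rabs_pos|].
  rewrite sumn_S. destruct (Nat.eq_dec n i).
  - subst. rewrite upd_same. rewrite sumn_zero. lra. intros j Hj. rewrite upd_other by lia.
    replace (x j - x j) with 0 by ring; apply Rabs_R0.
  - rewrite upd_other by auto. replace (x n - x n) with 0 by ring; rewrite Rabs_R0. lra.
Qed.
Lemma distn_tri n x y z : distn n x z <= distn n x y + distn n y z.
Proof. unfold distn. rewrite <- sumn_plus. apply sumn_le; intros.
  replace (x i - z i) with ((x i - y i) + (y i - z i)) by ring. apply Rabs_triang. Qed.
Lemma distn_sym n x y : distn n x y = distn n y x.
Proof. unfold distn; apply sumn_ext; intros; apply Rabs_minus_sym. Qed.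

Lemma finite_delta n (P : nat -> R -> Prop) :
  (forall k d d', P k d -> 0 < d' <= d -> P k d') ->
  (forall k, (k < n)%nat -> exists d, 0 < d /\ P k d) ->
  exists d, 0 < d /\ forall k, (k < n)%nat -> P k d.
Proof.
  intros Hmono. induction n; intros H.
  - exists 1; split; [lra| intros; lia].
  - destruct IHn as [d1 [Hd1 H1]]. intros; apply H; lia.
    destruct (H n ltac:(lia)) as [d2 [Hd2 H2]].
    exists (Rmin d1 d2). split. apply Rmin_pos; auto.
    intros k Hk. destruct (Nat.eq_dec k n).
    + subst. eapply Hmono; eauto. split; [apply Rmin_pos; auto| apply Rmin_r].
    + eapply Hmono. apply H1; lia. split; [apply Rmin_pos; auto| apply Rmin_l].
Qed.

Lemma dpl_plus f g x a b : derivable_pt_lim f x a -> derivable_pt_lim g x b ->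
  derivable_pt_lim (fun t => f t + g t) x (a + b).
Proof. intros; now apply (derivable_pt_lim_plus f g). Qed.
Lemma dpl_minus f g x a b : derivable_pt_lim f x a -> derivable_pt_lim g x b ->
  derivable_pt_lim (fun t => f t - g t) x (a - b).
Proof. intros; now apply (derivable_pt_lim_minus f g). Qed.
Lemma dpl_mult f g x a b : derivable_pt_lim f x a -> derivable_pt_lim g x b ->
  derivable_pt_lim (fun t => f t * g t) x (a * g x + f x * b).
Proof. intros; now apply (derivable_pt_lim_mult f g). Qed.
Lemma dpl_opp f x a : derivable_pt_lim f x a -> derivable_pt_lim (fun t => - f t) x (- a).
Proof. intros; now apply (derivable_pt_lim_opp f). Qed.
Lemma dpl_const c x : derivable_pt_lim (fun _ => c) x 0.
Proof. apply (derivable_pt_lim_const c). Qed.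
Lemma dpl_id x : derivable_pt_lim (fun t => t) x 1.
Proof. apply derivable_pt_lim_id. Qed.
Lemma dpl_eq f x a b : derivable_pt_lim f x a -> a = b -> derivable_pt_lim f x b.
Proof. intros; subst; auto. Qed.
Lemma dpl_ext f g x a : (forall t, f t = g t) -> derivable_pt_lim f x a -> derivable_pt_lim g x a.
Proof. intros H; replace g with f; auto; apply functional_extensionality; auto. Qed.
Lemma dpl_sumn n G G' x : (forall k, (k < n)%nat -> derivable_pt_lim (G k) x (G' k)) ->
  derivable_pt_lim (fun t => sumn n (fun k => G k t)) x (sumn n G').
Proof.
  induction n; intros H.
  - rewrite sumn_0. apply (dpl_ext (fun _ => 0)); [intros; now rewrite sumn_0|apply dpl_const].
  - rewrite sumn_S. apply (dpl_ext (fun t => sumn n (fun k => G k t) + G n t)).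
    intros; now rewrite sumn_S. apply dpl_plus; auto.
Qed.

Lemma MVT_any (f f' : R -> R) a b :
  (forall c, Rmin a b <= c <= Rmax a b -> derivable_pt_lim f c (f' c)) ->
  exists c, Rmin a b <= c <= Rmax a b /\ f b - f a = f' c * (b - a).
Proof.
  intros H. destruct (Rtotal_order a b) as [Hab|[Hab|Hab]].
  - rewrite Rmin_left, Rmax_right in H by lra. destruct (MVT_cor2 f f' a b Hab H) as [c [Hcc1 Hcc2]].
    exists c. rewrite Rmin_left, Rmax_right by lra. split; [lra|auto].
  - subst. exists b. rewrite Rmin_left, Rmax_left by lra. split; [lra|ring].
  - rewrite Rmin_right, Rmax_left in H by lra. destruct (MVT_cor2 f f' b a Hab H) as [c [Hcc1 Hcc2]].
    exists c. rewrite Rmin_right, Rmax_left by lra. split; [lra|]. lra.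
Qed.

Lemma between_abs a b c : Rmin a b <= c <= Rmax a b -> Rabs (c - a) <= Rabs (b - a).
Proof. intros [H1 H2]. unfold Rmin, Rmax in *. destruct (Rle_dec a b);
  unfold Rabs; destruct (Rcase_abs _); destruct (Rcase_abs _); lra. Qed.

Lemma distn_le_coords n y q p : (forall i, (i < n)%nat -> Rabs (y i - p i) <= Rabs (q i - p i)) ->
  distn n y p <= distn n q p.
Proof. intros; unfold distn; apply sumn_le; auto. Qed.

Definition has_pd (n : nat) (V : Vec -> Prop) (F : Vec -> R) : Prop :=
  forall k y, (k < n)%nat -> V y -> derivable_pt_lim (fun s => F (upd y k s)) (y k) (pd k F y).

Definition zstep (q p : Vec) (j : nat) : Vec := fun i => if Nat.ltb i j then q i else p i.

Lemma frechet n V F p : open_n n V -> has_pd n V F ->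
  (forall k, (k < n)%nat -> cont_on n V (pd k F)) -> V p ->
  forall eps, 0 < eps -> exists d, 0 < d /\ forall q, (forall j, (n <= j)%nat -> q j = p j) ->
    distn n q p < d ->
    Rabs (F q - F p - sumn n (fun k => pd k F p * (q k - p k))) <= eps * distn n q p.
Proof.
  intros Hop Hpd Hc Hp eps He.
  destruct (Hop p Hp) as [r [Hr HrV]].
  destruct (finite_delta n (fun k d => forall y, V y -> distn n y p < d -> Rabs (pd k F y - pd k F p) < eps))
    as [d1 [Hd1 Hd1']].
  { intros k d d' H [H1 H2] y Hy Hyd. apply H; auto; lra. }
  { intros k Hk. destruct (Hc k Hk p Hp eps He) as [d [Hd Hd']]. exists d; split; auto. }
  exists (Rmin r d1). split; [apply Rmin_pos; auto|].
  intros q Hq Hqd.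
  assert (Hr' : distn n q p < r) by exact (Rlt_le_trans _ _ _ Hqd (Rmin_l _ _)).
  assert (Hd1'' : distn n q p < d1) by exact (Rlt_le_trans _ _ _ Hqd (Rmin_r _ _)).
  assert (Main : forall j, (j <= n)%nat ->
    Rabs (F (zstep q p j) - F p - sumn j (fun k => pd k F p * (q k - p k))) <= eps * sumn j (fun k => Rabs (q k - p k))).
  { induction j; intros Hj.
    - replace (zstep q p 0) with p. rewrite !sumn_0. replace (F p - F p - 0) with 0 by ring.
      rewrite Rabs_R0; lra. apply functional_extensionality; intro i; reflexivity.
    - assert (Hzs : zstep q p (S j) = upd (zstep q p j) j (q j)).
      { apply functional_extensionality; intro i; unfold zstep, upd.
        destruct (Nat.eqb_spec i j). subst. rewrite (proj2 (Nat.ltb_lt j (S j))) by lia; reflexivity.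
        destruct (Nat.ltb_spec i (S j)); destruct (Nat.ltb_spec i j); auto; lia. }
      assert (Hzj : zstep q p j j = p j) by (unfold zstep; now rewrite Nat.ltb_irrefl).
      assert (Hin : forall s, Rmin (p j) (q j) <= s <= Rmax (p j) (q j) ->
                 V (upd (zstep q p j) j s) /\ distn n (upd (zstep q p j) j s) p <= distn n q p).
      { intros s Hs. assert (Hle : distn n (upd (zstep q p j) j s) p <= distn n q p).
        { apply distn_le_coords. intros i Hi. unfold upd, zstep.
          destruct (Nat.eqb_spec i j). subst; now apply between_abs.
          destruct (Nat.ltb_spec i j). lra. replace (p i - p i) with 0 by ring; rewrite Rabs_R0; apply Rabs_pos. }
        split; auto. apply HrV. lra. }
      destruct (MVT_any (fun s => F (upd (zstep q p j) j s)) (fun s => pd j F (upd (zstep q p j) j s)) (p j) (q j))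
        as [c [Hcc1 Hcc2]].
      { intros c Hc0. destruct (Hin c Hc0) as [HV _].
        pose proof (Hpd j (upd (zstep q p j) j c) ltac:(lia) HV) as H.
        rewrite upd_same in H. eapply dpl_ext; [|exact H]. intro t; simpl. now rewrite upd_upd. }
      rewrite Hzs, !sumn_S. simpl in Hcc2.
      rewrite <- Hzj in Hcc2 at 1. rewrite upd_id in Hcc2.
      destruct (Hin c Hcc1) as [HV Hdd].
      assert (Hpdc : Rabs (pd j F (upd (zstep q p j) j c) - pd j F p) < eps) by (apply Hd1'; auto; lra).
      pose proof (IHj ltac:(lia)) as IH.
      replace (F (upd (zstep q p j) j (q j)) - F p - (sumn j (fun k => pd k F p * (q k - p k)) + pd j F p * (q j - p j)))
        with ((F (zstep q p j) - F p - sumn j (fun k => pd k F p * (q k - p k))) +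
              (pd j F (upd (zstep q p j) j c) - pd j F p) * (q j - p j)) by lra.
      eapply Rle_trans; [apply Rabs_triang|]. rewrite Rabs_mult.
      assert (0 <= Rabs (q j - p j)) by apply Rabs_pos.
      assert (Rabs (pd j F (upd (zstep q p j) j c) - pd j F p) * Rabs (q j - p j) <= eps * Rabs (q j - p j)).
      { apply Rmult_le_compat_r; auto; lra. }
      lra. }
  pose proof (Main n (le_n n)) as M.
  replace (zstep q p n) with q in M. exact M.
  apply functional_extensionality; intro i; unfold zstep. destruct (Nat.ltb_spec i n); auto.
  all: try (symmetry; apply Hq; lia).
Qed.

Lemma chain n V F (c : R -> Vec) t0 dc :
  open_n n V -> has_pd n V F -> (forall k, (k < n)%nat -> cont_on n V (pd k F)) -> V (c t0) ->
  (forall t j, (n <= j)%nat -> c t j = c t0 j) ->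
  (forall k, (k < n)%nat -> derivable_pt_lim (fun t => c t k) t0 (dc k)) ->
  derivable_pt_lim (fun t => F (c t)) t0 (sumn n (fun k => pd k F (c t0) * dc k)).
Proof.
  intros Hop Hpd Hc Hp Hconst Hdc.
  set (p := c t0) in *.
  set (L := fun t => F p + sumn n (fun k => pd k F p * (c t k - p k))).
  set (E := fun t => F (c t) - L t).
  assert (HL : derivable_pt_lim L t0 (sumn n (fun k => pd k F p * dc k))).
  { unfold L. apply (dpl_eq _ _ (0 + sumn n (fun k => 0 * (c t0 k - p k) + pd k F p * (dc k - 0)))).
    apply dpl_plus. apply dpl_const.
    apply (dpl_sumn n (fun k t => pd k F p * (c t k - p k))). intros k Hk.
    apply (dpl_mult (fun _ => pd k F p) (fun t => c t k - p k)). apply dpl_const. apply (dpl_minus (fun t => c t k) (fun _ => p k)). apply Hdc; auto. apply dpl_const.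
    rewrite Rplus_0_l. apply sumn_ext; intros; ring. }
  assert (HE : derivable_pt_lim E t0 0).
  { intros eps He.
    destruct (finite_delta n (fun k d => forall h, Rabs h < d -> Rabs (c (t0 + h) k - p k) <= (Rabs (dc k) + 1) * Rabs h))
      as [d1 [Hd1 Hd1']].
    { intros k d d' H [H1 H2] h Hh. apply H; lra. }
    { intros k Hk. destruct (Hdc k Hk 1 ltac:(lra)) as [d Hd]. exists d. split; [apply cond_pos|].
      intros h Hh. destruct (Req_dec h 0) as [H0|H0].
      - subst. rewrite Rplus_0_r. fold p. replace (p k - p k) with 0 by ring. rewrite Rabs_R0, Rmult_0_r. lra.
      - pose proof (Hd h H0 Hh) as H. fold p in H.
        assert (Hh0 : 0 < Rabs h) by (apply Rabs_pos_lt; auto).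
        replace (c (t0 + h) k - p k) with (((c (t0 + h) k - p k) / h - dc k) * h + dc k * h) by (field; auto).
        eapply Rle_trans; [apply Rabs_triang|]. rewrite !Rabs_mult.
        assert (Rabs ((c (t0 + h) k - p k) / h - dc k) * Rabs h <= 1 * Rabs h) by (apply Rmult_le_compat_r; lra).
        lra. }
    set (K := sumn n (fun k => Rabs (dc k) + 1) + 1).
    assert (HK : 1 <= K). { unfold K. pose proof (sumn_nonneg n (fun k => Rabs (dc k) + 1)). 
      assert (0 <= sumn n (fun k => Rabs (dc k) + 1)) by (apply H; intros; pose proof (Rabs_pos (dc i)); lra). lra. }
    destruct (frechet n V F p Hop Hpd Hc Hp (eps / (2 * K)) ltac:(apply Rdiv_lt_0_compat; lra)) as [d2 [Hd2 Hd2']].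
    assert (Hdm : 0 < Rmin d1 (d2 / K)) by (apply Rmin_pos; [lra| apply Rdiv_lt_0_compat; lra]).
    exists (mkposreal _ Hdm). intros h Hh0 Hh. simpl in Hh.
    assert (Hh1 : Rabs h < d1) by exact (Rlt_le_trans _ _ _ Hh (Rmin_l _ _)).
    assert (Hh2 : Rabs h < d2 / K) by exact (Rlt_le_trans _ _ _ Hh (Rmin_r _ _)).
    assert (Hhp : 0 < Rabs h) by (apply Rabs_pos_lt; auto).
    assert (Hdist : distn n (c (t0 + h)) p <= K * Rabs h).
    { unfold distn. apply Rle_trans with (sumn n (fun k => (Rabs (dc k) + 1) * Rabs h)).
      apply sumn_le; intros; apply Hd1'; auto. rewrite sumn_scal_r. unfold K.
      apply Rmult_le_compat_r; [apply Rabs_pos|lra]. }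
    assert (Hdist2 : distn n (c (t0 + h)) p < d2).
    { apply Rle_lt_trans with (K * Rabs h); auto.
      apply (Rmult_lt_compat_l K) in Hh2; [|lra]. replace (K * (d2 / K)) with d2 in Hh2 by (field; lra). lra. }
    pose proof (Hd2' (c (t0 + h)) (fun j Hj => Hconst (t0 + h) j Hj) Hdist2) as Hf.
    assert (HEe : E (t0 + h) - E t0 = F (c (t0 + h)) - F p - sumn n (fun k => pd k F p * (c (t0 + h) k - p k))).
    { unfold E, L. fold p. rewrite (sumn_zero n (fun k => pd k F p * (p k - p k))). ring.
      intros; ring. }
    rewrite HEe. rewrite Rminus_0_r. unfold Rdiv. rewrite Rabs_mult, Rabs_inv.
    apply Rle_lt_trans with ((eps / (2 * K)) * (K * Rabs h) * / Rabs h).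
    apply Rmult_le_compat_r. left; apply Rinv_0_lt_compat; auto.
    eapply Rle_trans; [exact Hf|]. apply Rmult_le_compat_l; auto. left; apply Rdiv_lt_0_compat; lra.
    replace (eps / (2 * K) * (K * Rabs h) * / Rabs h) with (eps / 2) by (field; lra). lra. }
  apply (dpl_ext (fun t => L t + E t)). intro t. unfold E. ring.
  apply (dpl_eq _ _ (sumn n (fun k => pd k F p * dc k) + 0)). apply dpl_plus; auto. ring.
Qed.

Definition PP (n : nat) (U : Vec -> Prop) (f : Vec -> R) : Prop :=
  cont_on n U f /\ (forall i x, (i < n)%nat -> U x ->
       exists d, derivable_pt_lim (fun t => f (upd x i t)) (x i) d).
Definition good (n : nat) (U : Vec -> Prop) (k : nat) (f : Vec -> R) : Prop :=
  forall l, (forall i, In i l -> (i < n)%nat) -> (length l <= k)%nat -> PP n U (iter_pd l f).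
Definition eqU (U : Vec -> Prop) (f g : Vec -> R) : Prop := forall x, U x -> f x = g x.

Lemma iter_pd_app l i f : iter_pd (l ++ i :: nil) f = iter_pd l (pd i f).
Proof. induction l; simpl; auto. now rewrite IHl. Qed.

Lemma smooth_good n U f : smooth_on n U f <-> forall k, good n U k f.
Proof.
  split.
  - intros H k l Hl _. exact (H l Hl).
  - intros H l Hl. exact (H (length l) l Hl (le_n _)).
Qed.

Lemma near_upd n U x i : open_n n U -> U x -> exists r, 0 < r /\ forall t, Rabs (t - x i) < r -> U (upd x i t).
Proof. intros Hop Hx. destruct (Hop x Hx) as [r [Hr H]]. exists r; split; auto.
  intros t Ht. apply H. pose proof (distn_upd n x i t). lra. Qed.

Lemma pd_local n U f g i : open_n n U -> eqU U f g -> eqU U (pd i f) (pd i g).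
Proof.
  intros Hop H x Hx. destruct (near_upd n U x i Hop Hx) as [r [Hr Hr']].
  unfold pd. f_equal. apply functional_extensionality; intro l.
  apply propositional_extensionality. split; intro Hd.
  - eapply dpl_local; [exact Hr| |exact Hd]. intros; apply H; auto.
  - eapply dpl_local; [exact Hr| |exact Hd]. intros; symmetry; apply H; auto.
Qed.

Lemma iter_pd_local n U f g l : open_n n U -> eqU U f g -> eqU U (iter_pd l f) (iter_pd l g).
Proof. intros Hop H. induction l; simpl; auto. now apply (pd_local n). Qed.

Lemma PP_local n U f g : open_n n U -> eqU U f g -> PP n U f -> PP n U g.
Proof.
  intros Hop H [Hc Hd]. split.
  - intros x Hx eps He. destruct (Hc x Hx eps He) as [d [Hd0 Hd1]]. exists d; split; auto.
    intros y Hy Hyx. rewrite <- !H; auto.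
  - intros i x Hi Hx. destruct (Hd i x Hi Hx) as [l Hl]. exists l.
    destruct (near_upd n U x i Hop Hx) as [r [Hr Hr']].
    eapply dpl_local; [exact Hr| |exact Hl]. intros; apply H; auto.
Qed.

Lemma good_local n U k f g : open_n n U -> eqU U f g -> good n U k f -> good n U k g.
Proof. intros Hop H Hf l Hl Hlen. apply (PP_local n U (iter_pd l f)); auto.
  now apply (iter_pd_local n). Qed.

Lemma good_PP n U k f : good n U k f -> PP n U f.
Proof. intro H. apply (H nil); simpl; auto; [tauto|lia]. Qed.

Lemma good_S n U k f : PP n U f -> (forall i, (i < n)%nat -> good n U k (pd i f)) -> good n U (S k) f.
Proof.
  intros HP H l. induction l as [|i l _] using rev_ind; intros Hl Hlen; simpl; auto.
  rewrite iter_pd_app. apply H. apply Hl; apply in_or_app; simpl; auto.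
  intros j Hj; apply Hl; apply in_or_app; auto.
  rewrite length_app in Hlen; simpl in Hlen; lia.
Qed.

Lemma good_S_pd n U k f i : (i < n)%nat -> good n U (S k) f -> good n U k (pd i f).
Proof.
  intros Hi H l Hl Hlen. rewrite <- iter_pd_app. apply H.
  intros j Hj; apply in_app_or in Hj; destruct Hj as [Hj|[Hj|[]]]; subst; auto.
  rewrite length_app; simpl; lia.
Qed.

Lemma good_mono n U k k' f : (k' <= k)%nat -> good n U k f -> good n U k' f.
Proof. intros Hk H l Hl Hlen; apply H; auto; lia. Qed.

Lemma smooth_pd n U f i : (i < n)%nat -> smooth_on n U f -> smooth_on n U (pd i f).
Proof. intros Hi H. apply smooth_good. intro k. apply good_S_pd; auto. now apply smooth_good. Qed.

Lemma PP_deriv n U f i x : PP n U f -> (i < n)%nat -> U x ->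
  derivable_pt_lim (fun t => f (upd x i t)) (x i) (pd i f x).
Proof. intros [_ H] Hi Hx. apply pd_spec. now apply H. Qed.

Lemma cont_plus n U f g : cont_on n U f -> cont_on n U g -> cont_on n U (fun x => f x + g x).
Proof.
  intros Hf Hg x Hx eps He.
  destruct (Hf x Hx (eps/2) ltac:(lra)) as [d1 [Hd1 H1]].
  destruct (Hg x Hx (eps/2) ltac:(lra)) as [d2 [Hd2 H2]].
  exists (Rmin d1 d2); split; [apply Rmin_pos; auto|]. intros y Hy Hyx.
  pose proof (H1 y Hy (Rlt_le_trans _ _ _ Hyx (Rmin_l _ _))).
  pose proof (H2 y Hy (Rlt_le_trans _ _ _ Hyx (Rmin_r _ _))).
  replace (f y + g y - (f x + g x)) with ((f y - f x) + (g y - g x)) by ring.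
  eapply Rle_lt_trans; [apply Rabs_triang|]. lra.
Qed.

Lemma cont_opp n U f : cont_on n U f -> cont_on n U (fun x => - f x).
Proof.
  intros Hf x Hx eps He. destruct (Hf x Hx eps He) as [d [Hd H]]. exists d; split; auto.
  intros y Hy Hyx. replace (- f y - - f x) with (- (f y - f x)) by ring. rewrite Rabs_Ropp. auto.
Qed.

Lemma cont_mult n U f g : cont_on n U f -> cont_on n U g -> cont_on n U (fun x => f x * g x).
Proof.
  intros Hf Hg x Hx eps He.
  set (A := Rabs (f x) + 1). set (B := Rabs (g x) + 1).
  assert (HA : 1 <= A) by (unfold A; pose proof (Rabs_pos (f x)); lra).
  assert (HB : 1 <= B) by (unfold B; pose proof (Rabs_pos (g x)); lra).
  destruct (Hf x Hx (eps/(2*B)) ltac:(apply Rdiv_lt_0_compat; lra)) as [d1 [Hd1 H1]].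
  destruct (Hg x Hx (Rmin 1 (eps/(2*A))) ltac:(apply Rmin_pos; [lra|apply Rdiv_lt_0_compat; lra])) as [d2 [Hd2 H2]].
  exists (Rmin d1 d2); split; [apply Rmin_pos; auto|]. intros y Hy Hyx.
  pose proof (H1 y Hy (Rlt_le_trans _ _ _ Hyx (Rmin_l _ _))) as E1.
  pose proof (H2 y Hy (Rlt_le_trans _ _ _ Hyx (Rmin_r _ _))) as E2.
  assert (E2a : Rabs (g y - g x) < 1) by exact (Rlt_le_trans _ _ _ E2 (Rmin_l _ _)).
  assert (E2b : Rabs (g y - g x) < eps/(2*A)) by exact (Rlt_le_trans _ _ _ E2 (Rmin_r _ _)).
  assert (Hgy : Rabs (g y) <= B).
  { unfold B. replace (g y) with ((g y - g x) + g x) by ring. pose proof (Rabs_triang (g y - g x) (g x)). lra. }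
  replace (f y * g y - f x * g x) with ((f y - f x) * g y + f x * (g y - g x)) by ring.
  eapply Rle_lt_trans; [apply Rabs_triang|]. rewrite !Rabs_mult.
  assert (T1 : Rabs (f y - f x) * Rabs (g y) < eps/(2*B) * B).
  { apply Rle_lt_trans with (Rabs (f y - f x) * B). apply Rmult_le_compat_l; [apply Rabs_pos|lra].
    apply Rmult_lt_compat_r; lra. }
  assert (T2 : Rabs (f x) * Rabs (g y - g x) <= A * (eps/(2*A))).
  { apply Rmult_le_compat; try apply Rabs_pos. unfold A; lra. lra. }
  replace (eps/(2*B) * B) with (eps/2) in T1 by (field; lra).
  replace (A * (eps/(2*A))) with (eps/2) in T2 by (field; lra).
  lra.
Qed.

Lemma cont_const n U c : cont_on n U (fun _ => c).
Proof. intros x Hx eps He. exists 1; split; [lra|]. intros. replace (c - c) with 0 by ring. rewrite Rabs_R0; lra. Qed.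

Lemma cont_coord n U j : (j < n)%nat -> cont_on n U (fun x => x j).
Proof. intros Hj x Hx eps He. exists eps; split; auto. intros y Hy Hyx.
  pose proof (distn_coord n y x j Hj). lra. Qed.

Lemma good_plus n U k f g : open_n n U -> good n U k f -> good n U k g -> good n U k (fun x => f x + g x).
Proof.
  intro Hop. revert f g. induction k; intros f g Hf Hg.
  - intros l Hl Hlen. destruct l; [|simpl in Hlen; lia]. simpl.
    destruct (good_PP _ _ _ _ Hf) as [Hfc Hfd]. destruct (good_PP _ _ _ _ Hg) as [Hgc Hgd].
    split. now apply cont_plus.
    intros i x Hi Hx. destruct (Hfd i x Hi Hx) as [a Ha]. destruct (Hgd i x Hi Hx) as [b Hb].
    exists (a + b). now apply (dpl_plus (fun t => f (upd x i t)) (fun t => g (upd x i t))).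
  - pose proof (good_PP _ _ _ _ Hf) as Pf. pose proof (good_PP _ _ _ _ Hg) as Pg.
    apply good_S.
    + split. apply cont_plus; [apply Pf|apply Pg].
      intros i x Hi Hx. exists (pd i f x + pd i g x).
      apply (dpl_plus (fun t => f (upd x i t)) (fun t => g (upd x i t))); now apply (PP_deriv n U).
    + intros i Hi. apply (good_local n U k (fun x => pd i f x + pd i g x)); auto.
      * intros x Hx. symmetry. apply pd_eq.
        apply (dpl_plus (fun t => f (upd x i t)) (fun t => g (upd x i t))); now apply (PP_deriv n U).
      * apply IHk; apply good_S_pd; auto.
Qed.

Lemma good_opp n U k f : open_n n U -> good n U k f -> good n U k (fun x => - f x).
Proof.
  intro Hop. revert f. induction k; intros f Hf.
  - intros l Hl Hlen. destruct l; [|simpl in Hlen; lia]. simpl.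
    destruct (good_PP _ _ _ _ Hf) as [Hfc Hfd].
    split. now apply cont_opp.
    intros i x Hi Hx. destruct (Hfd i x Hi Hx) as [a Ha].
    exists (- a). now apply (dpl_opp (fun t => f (upd x i t))).
  - pose proof (good_PP _ _ _ _ Hf) as Pf.
    apply good_S.
    + split. apply cont_opp; apply Pf.
      intros i x Hi Hx. exists (- pd i f x).
      apply (dpl_opp (fun t => f (upd x i t))); now apply (PP_deriv n U).
    + intros i Hi. apply (good_local n U k (fun x => - pd i f x)); auto.
      * intros x Hx. symmetry. apply pd_eq.
        apply (dpl_opp (fun t => f (upd x i t))); now apply (PP_deriv n U).
      * apply IHk; apply good_S_pd; auto.
Qed.

Lemma good_mult n U k f g : open_n n U -> good n U k f -> good n U k g -> good n U k (fun x => f x * g x).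
Proof.
  intro Hop. revert f g. induction k; intros f g Hf Hg.
  - intros l Hl Hlen. destruct l; [|simpl in Hlen; lia]. simpl.
    destruct (good_PP _ _ _ _ Hf) as [Hfc Hfd]. destruct (good_PP _ _ _ _ Hg) as [Hgc Hgd].
    split. now apply cont_mult.
    intros i x Hi Hx. destruct (Hfd i x Hi Hx) as [a Ha]. destruct (Hgd i x Hi Hx) as [b Hb].
    eexists. exact (dpl_mult (fun t => f (upd x i t)) (fun t => g (upd x i t)) _ _ _ Ha Hb).
  - pose proof (good_PP _ _ _ _ Hf) as Pf. pose proof (good_PP _ _ _ _ Hg) as Pg.
    apply good_S.
    + split. apply cont_mult; [apply Pf|apply Pg].
      intros i x Hi Hx. eexists.
      apply (dpl_mult (fun t => f (upd x i t)) (fun t => g (upd x i t))); now apply (PP_deriv n U).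
    + intros i Hi. apply (good_local n U k (fun x => pd i f x * g x + f x * pd i g x)); auto.
      * intros x Hx. symmetry. apply pd_eq. rewrite <- (upd_id x i) at 3 4.
        apply (dpl_mult (fun t => f (upd x i t)) (fun t => g (upd x i t))); now apply (PP_deriv n U).
      * apply good_plus; auto; apply IHk; try (apply good_S_pd; auto); apply (good_mono _ _ (S k)); auto.
Qed.

Lemma good_0 n U f : PP n U f -> good n U 0 f.
Proof. intros H l Hl Hlen. destruct l; [exact H|simpl in Hlen; lia]. Qed.

Lemma pd_const i c x : pd i (fun _ => c) x = 0.
Proof. apply pd_eq. apply dpl_const. Qed.

Lemma PP_const n U c : PP n U (fun _ => c).
Proof. split. apply cont_const. intros. exists 0. apply dpl_const. Qed.

Lemma smooth_const n U c : smooth_on n U (fun _ => c).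
Proof.
  apply smooth_good. intro k. revert c. induction k; intro c.
  - apply good_0, PP_const.
  - apply good_S. apply PP_const. intros i Hi.
    replace (pd i (fun _ => c)) with (fun _ : Vec => 0). apply IHk.
    apply functional_extensionality; intro; now rewrite pd_const.
Qed.

Lemma pd_coord i j x : pd i (fun y => y j) x = if Nat.eqb j i then 1 else 0.
Proof.
  apply pd_eq. destruct (Nat.eqb_spec j i).
  - subst. apply (dpl_ext (fun t => t)). intro; now rewrite upd_same. apply dpl_id.
  - apply (dpl_ext (fun _ => x j)). intro; now rewrite upd_other. apply dpl_const.
Qed.

Lemma PP_coord n U j : (j < n)%nat -> PP n U (fun y => y j).
Proof. intros Hj. split. now apply cont_coord. intros i x Hi Hx. exists (pd i (fun y => y j) x).
  rewrite pd_coord. destruct (Nat.eqb_spec j i).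
  - subst. apply (dpl_ext (fun t => t)). intro; now rewrite upd_same. apply dpl_id.
  - apply (dpl_ext (fun _ => x j)). intro; now rewrite upd_other. apply dpl_const.
Qed.

Lemma smooth_coord n U j : (j < n)%nat -> smooth_on n U (fun y => y j).
Proof.
  intros Hj. apply smooth_good. intro k. destruct k.
  - apply good_0, PP_coord; auto.
  - apply good_S. apply PP_coord; auto. intros i Hi.
    replace (pd i (fun y => y j)) with (fun _ : Vec => if Nat.eqb j i then 1 else 0).
    apply smooth_good, smooth_const.
    apply functional_extensionality; intro; now rewrite pd_coord.
Qed.

Lemma smooth_plus n U f g : open_n n U -> smooth_on n U f -> smooth_on n U g -> smooth_on n U (fun x => f x + g x).
Proof. intros Hop Hf Hg. apply smooth_good; intro k. apply good_plus; auto; now apply smooth_good. Qed.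
Lemma smooth_mult n U f g : open_n n U -> smooth_on n U f -> smooth_on n U g -> smooth_on n U (fun x => f x * g x).
Proof. intros Hop Hf Hg. apply smooth_good; intro k. apply good_mult; auto; now apply smooth_good. Qed.
Lemma smooth_opp n U f : open_n n U -> smooth_on n U f -> smooth_on n U (fun x => - f x).
Proof. intros Hop Hf. apply smooth_good; intro k. apply good_opp; auto; now apply smooth_good. Qed.
Lemma smooth_local n U f g : open_n n U -> eqU U f g -> smooth_on n U f -> smooth_on n U g.
Proof. intros Hop H Hf. apply smooth_good; intro k. eapply good_local; eauto. now apply smooth_good. Qed.

Lemma good_sumn n U k m G : open_n n U -> (forall j, (j < m)%nat -> good n U k (G j)) ->
  good n U k (fun x => sumn m (fun j => G j x)).
Proof.
  intros Hop. induction m; intros H.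
  - replace (fun x : Vec => sumn 0 (fun j => G j x)) with (fun _ : Vec => 0).
    apply smooth_good, smooth_const. apply functional_extensionality; intro; now rewrite sumn_0.
  - replace (fun x : Vec => sumn (S m) (fun j => G j x)) with (fun x => sumn m (fun j => G j x) + G m x).
    apply good_plus; auto. apply functional_extensionality; intro; now rewrite sumn_S.
Qed.

Lemma sumn_const n c : sumn n (fun _ => c) = INR n * c.
Proof. induction n. rewrite sumn_0; simpl; ring. rewrite sumn_S, IHn, S_INR; ring. Qed.

Section Comp.
Variables (m n : nat) (U V : Vec -> Prop) (phi : Vec -> Vec).
Hypothesis HU : open_n m U.
Hypothesis HV : open_n n V.
Hypothesis Hphi : forall j, (j < n)%nat -> smooth_on m U (fun y => phi y j).
Hypothesis HUV : forall y, U y -> V (phi y).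
Hypothesis Hc0 : forall y j, (n <= j)%nat -> phi y j = 0.

Lemma phi_PP j : (j < n)%nat -> PP m U (fun y => phi y j).
Proof. intro Hj. apply (good_PP m U 0). now apply smooth_good, Hphi. Qed.

Lemma comp_cont F : cont_on n V F -> cont_on m U (fun y => F (phi y)).
Proof.
  intros HF x Hx eps He.
  destruct (HF (phi x) (HUV x Hx) eps He) as [dF [HdF HdF']].
  destruct (finite_delta n (fun j d => forall y, U y -> distn m y x < d -> Rabs (phi y j - phi x j) < dF / (INR n + 1)))
    as [d [Hd Hd']].
  { intros j d d' H [H1 H2] y Hy Hyd. apply H; auto; lra. }
  { intros j Hj. assert (Hpos : 0 < dF / (INR n + 1)) by (apply Rdiv_lt_0_compat; [lra| pose proof (pos_INR n); lra]).
    destruct (proj1 (phi_PP j Hj) x Hx _ Hpos) as [d [Hd Hd']]. exists d; split; auto. }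
  exists d. split; auto. intros y Hy Hyx. apply HdF'; auto.
  unfold distn. apply Rle_lt_trans with (sumn n (fun _ => dF / (INR n + 1))).
  apply sumn_le; intros; left; apply Hd'; auto.
  rewrite sumn_const. pose proof (pos_INR n).
  apply Rmult_lt_reg_r with (INR n + 1); [lra|].
  replace (INR n * (dF / (INR n + 1)) * (INR n + 1)) with (INR n * dF) by (field; lra). nra.
Qed.

Lemma comp_deriv F i x : good n V 1 F -> (i < m)%nat -> U x ->
  derivable_pt_lim (fun t => F (phi (upd x i t))) (x i)
    (sumn n (fun k => pd k F (phi x) * pd i (fun y => phi y k) x)).
Proof.
  intros HF Hi Hx.
  pose proof (good_PP _ _ _ _ HF) as PF.
  pose proof (chain n V F (fun t => phi (upd x i t)) (x i) (fun k => pd i (fun y => phi y k) x)) as H.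
  cbv beta in H. rewrite upd_id in H. apply H; auto.
  - intros k y Hk Hy. now apply (PP_deriv n V).
  - intros k Hk. apply (good_PP n V 0). now apply good_S_pd.
  - intros t j Hj. rewrite !Hc0; auto.
  - intros k Hk. apply (PP_deriv m U (fun y => phi y k)); auto. now apply phi_PP.
Qed.

Lemma comp_pd F i x : good n V 1 F -> (i < m)%nat -> U x ->
  pd i (fun y => F (phi y)) x = sumn n (fun k => pd k F (phi x) * pd i (fun y => phi y k) x).
Proof. intros; apply pd_eq; now apply comp_deriv. Qed.

Lemma comp_PP F : good n V 1 F -> PP m U (fun y => F (phi y)).
Proof.
  intros HF. split.
  - apply comp_cont. apply (good_PP _ _ _ _ HF).
  - intros i x Hi Hx. eexists. now apply comp_deriv.
Qed.

Lemma good_comp k : forall F, good n V (S k) F -> good m U k (fun y => F (phi y)).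
Proof.
  induction k; intros F HF.
  - apply good_0, comp_PP; auto.
  - apply good_S. apply comp_PP. apply (good_mono _ _ (S (S k))); auto; lia.
    intros i Hi.
    apply (good_local m U k (fun y => sumn n (fun kk => pd kk F (phi y) * pd i (fun y => phi y kk) y))); auto.
    + intros x Hx. symmetry. apply comp_pd; auto. apply (good_mono _ _ (S (S k))); auto; lia.
    + apply good_sumn; auto. intros j Hj. apply good_mult; auto.
      * apply IHk. now apply good_S_pd.
      * apply smooth_good. apply smooth_pd; auto.
Qed.

Lemma smooth_comp F : smooth_on n V F -> smooth_on m U (fun y => F (phi y)).
Proof. intros HF. apply smooth_good; intro k. apply good_comp. now apply smooth_good. Qed.

End Comp.

Definition V1 : Vec -> Prop := fun z => z 0%nat <> 0.

Lemma V1_open : open_n 1 V1.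
Proof.
  intros x Hx. exists (Rabs (x 0%nat)). split. now apply Rabs_pos_lt.
  intros y Hy. unfold distn in Hy. rewrite sumn_S, sumn_0 in Hy. unfold V1 in *.
  intro H. rewrite H in Hy. replace (0 - x 0%nat) with (- x 0%nat) in Hy by ring.
  rewrite Rabs_Ropp in Hy. lra.
Qed.

Lemma dpl_invpow a p t0 : t0 <> 0 ->
  derivable_pt_lim (fun t => a * (/ t) ^ p) t0 (- a * INR p * (/ t0) ^ (S p)).
Proof.
  intros Ht.
  assert (Hinv : derivable_pt_lim (fun t => / t) t0 (- (/ t0) ^ 2)).
  { pose proof (derivable_pt_lim_div (fun _ => 1) (fun t => t) t0 0 1 (derivable_pt_lim_const 1 t0) (derivable_pt_lim_id t0) Ht) as H.
    eapply dpl_ext; [|eapply dpl_eq; [exact H|]].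
    intro t. unfold div_fct. simpl. unfold Rdiv; ring. unfold Rsqr. simpl. field; auto. }
  pose proof (derivable_pt_lim_comp (fun t => / t) (fun u => u ^ p) t0 _ _ Hinv (derivable_pt_lim_pow (/ t0) p)) as H.
  pose proof (dpl_mult (fun _ => a) _ t0 0 _ (dpl_const a t0) H) as H2.
  eapply dpl_ext; [|eapply dpl_eq; [exact H2|]]. intro t; unfold comp; reflexivity.
  unfold comp. destruct p. simpl; ring. rewrite S_INR. simpl pred. simpl. field. auto.
Qed.

Lemma cont_inv : cont_on 1 V1 (fun z => / z 0%nat).
Proof.
  intros x Hx eps He. unfold V1 in Hx. set (a := Rabs (x 0%nat)).
  assert (Ha : 0 < a) by (apply Rabs_pos_lt; auto).
  exists (Rmin (a/2) (eps * a * a / 2)). split. apply Rmin_pos; [lra|]. 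
  apply Rdiv_lt_0_compat; [|lra]. apply Rmult_lt_0_compat; [apply Rmult_lt_0_compat|]; lra.
  intros y Hy Hyx. unfold distn in Hyx. rewrite sumn_S, sumn_0, Rplus_0_l in Hyx.
  assert (H1 : Rabs (y 0%nat - x 0%nat) < a/2) by exact (Rlt_le_trans _ _ _ Hyx (Rmin_l _ _)).
  assert (H2 : Rabs (y 0%nat - x 0%nat) < eps * a * a / 2) by exact (Rlt_le_trans _ _ _ Hyx (Rmin_r _ _)).
  assert (Hy0 : a / 2 <= Rabs (y 0%nat)).
  { pose proof (Rabs_triang_inv (x 0%nat) (x 0%nat - y 0%nat)). replace (x 0%nat - (x 0%nat - y 0%nat)) with (y 0%nat) in H by ring.
    rewrite Rabs_minus_sym in H. fold a in H. lra. }
  assert (Hyn : y 0%nat <> 0) by (intro E; rewrite E, Rabs_R0 in Hy0; lra).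
  replace (/ y 0%nat - / x 0%nat) with ((x 0%nat - y 0%nat) * / (y 0%nat * x 0%nat)) by (field; auto).
  rewrite Rabs_mult, Rabs_inv, Rabs_mult, Rabs_minus_sym. fold a.
  apply Rle_lt_trans with (Rabs (y 0%nat - x 0%nat) * / (a / 2 * a)).
  apply Rmult_le_compat_l. apply Rabs_pos. apply Rinv_le_contravar. apply Rmult_lt_0_compat; lra.
  apply Rmult_le_compat_r; lra.
  apply Rlt_le_trans with ((eps * a * a / 2) * / (a / 2 * a)).
  apply Rmult_lt_compat_r; auto. apply Rinv_0_lt_compat, Rmult_lt_0_compat; lra.
  right. field. lra.
Qed.

Lemma smooth_inv : smooth_on 1 V1 (fun z => / z 0%nat).
Proof.
  set (Q := fun f => exists a p, eqU V1 f (fun z => a * (/ z 0%nat) ^ p)).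
  assert (Hcont : forall a p, cont_on 1 V1 (fun z => a * (/ z 0%nat) ^ p)).
  { intros a p. apply cont_mult. apply cont_const. induction p. simpl. apply cont_const.
    simpl. apply cont_mult; auto. apply cont_inv. }
  assert (HQpd : forall f, Q f -> Q (pd 0 f) /\ PP 1 V1 f).
  { intros f [a [p Hf]].
    assert (Hd : forall x, V1 x -> derivable_pt_lim (fun t => f (upd x 0 t)) (x 0%nat) (- a * INR p * (/ x 0%nat) ^ (S p))).
    { intros x Hx. destruct (near_upd 1 V1 x 0 V1_open Hx) as [r [Hr Hr']].
      eapply dpl_local; [exact Hr| |apply (dpl_invpow a p _ Hx)].
      intros t Ht. rewrite Hf by auto. rewrite upd_same; reflexivity. }
    split.
    - exists (- a * INR p), (S p). intros x Hx. apply pd_eq. now apply Hd.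
    - split.
      + intros x Hx eps He. destruct (Hcont a p x Hx eps He) as [d [Hd0 Hd1]]. exists d; split; auto.
        intros y Hy Hyx. rewrite !Hf; auto.
      + intros i x Hi Hx. assert (i = 0%nat) by lia. subst. eexists; now apply Hd. }
  intros l Hl. enough (Q (iter_pd l (fun z => / z 0%nat))) by (now apply HQpd).
  induction l as [|i l IH]; simpl.
  - exists 1, 1%nat. intros x _. simpl. ring.
  - assert (i = 0%nat) by (specialize (Hl i (or_introl eq_refl)); lia). subst.
    apply HQpd. apply IH. intros j Hj; apply Hl; simpl; auto.
Qed.

Lemma upd3_i x i k s t u : i <> k -> upd (upd (upd x i s) k t) i u = upd (upd x i u) k t.
Proof. intro H. rewrite (upd_comm x i k s t H), upd_upd. now rewrite upd_comm by auto. Qed.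

Lemma dist2 n x i k s t : distn n (upd (upd x i s) k t) x <= Rabs (s - x i) + Rabs (t - x k).
Proof.
  destruct (Nat.eq_dec i k).
  - subst. rewrite upd_upd. pose proof (distn_upd n x k t). pose proof (Rabs_pos (s - x k)). lra.
  - eapply Rle_trans; [apply (distn_tri n _ (upd x i s))|].
    pose proof (distn_upd n (upd x i s) k t). rewrite upd_other in H by auto.
    pose proof (distn_upd n x i s). lra.
Qed.

Lemma schwarz n U f i k x : open_n n U -> U x -> (i < n)%nat -> (k < n)%nat -> good n U 2 f ->
  pd k (pd i f) x = pd i (pd k f) x.
Proof.
  intros Hop Hx Hi Hk Hf.
  destruct (Nat.eq_dec i k) as [E|Hik]; [subst; reflexivity|].
  pose proof (good_PP _ _ _ _ Hf) as P0.
  pose proof (good_PP _ _ _ _ (good_S_pd _ _ _ _ _ Hi (good_mono _ _ 2 1 _ ltac:(lia) Hf))) as Pi.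
  pose proof (good_PP _ _ _ _ (good_S_pd _ _ _ _ _ Hk (good_mono _ _ 2 1 _ ltac:(lia) Hf))) as Pk.
  pose proof (good_PP _ _ _ _ (good_S_pd _ _ _ _ _ Hk (good_S_pd _ _ _ _ _ Hi Hf))) as Pki.
  pose proof (good_PP _ _ _ _ (good_S_pd _ _ _ _ _ Hi (good_S_pd _ _ _ _ _ Hk Hf))) as Pik.
  set (A := pd k (pd i f)) in *. set (B := pd i (pd k f)) in *.
  set (y := fun s t => upd (upd x i s) k t).
  assert (Hyi : forall s t, y s t i = s) by (intros; unfold y; rewrite upd_other, upd_same; auto).
  assert (Hyk : forall s t, y s t k = t) by (intros; unfold y; now rewrite upd_same).
  destruct (Hop x Hx) as [r [Hr Hr']].
  apply Rminus_diag_uniq. destruct (Req_dec (A x - B x) 0) as [Z|Z]; [exact Z|exfalso].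
  pose proof (Rabs_pos_lt _ Z) as Hpos. set (eps := Rabs (A x - B x) / 2) in *.
  assert (He : 0 < eps) by (unfold eps; lra).
  destruct (proj1 Pki x Hx eps He) as [dA [HdA HdA']].
  destruct (proj1 Pik x Hx eps He) as [dB [HdB HdB']].
  set (h := Rmin r (Rmin dA dB) / 4).
  assert (Hh : 0 < h) by (unfold h; apply Rdiv_lt_0_compat; [apply Rmin_pos; [lra| apply Rmin_pos; lra]|lra]).
  assert (Hh1 : 2 * h < r) by (unfold h; pose proof (Rmin_l r (Rmin dA dB)); lra).
  assert (Hh2 : 2 * h < dA) by (unfold h; pose proof (Rmin_r r (Rmin dA dB)); pose proof (Rmin_l dA dB); lra).
  assert (Hh3 : 2 * h < dB) by (unfold h; pose proof (Rmin_r r (Rmin dA dB)); pose proof (Rmin_r dA dB); lra).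
  assert (Hbox : forall s t, x i <= s <= x i + h -> x k <= t <= x k + h -> distn n (y s t) x <= 2 * h).
  { intros s t Hs Ht. unfold y. eapply Rle_trans; [apply dist2|].
    rewrite !Rabs_right by lra. lra. }
  assert (HboxU : forall s t, x i <= s <= x i + h -> x k <= t <= x k + h -> U (y s t)).
  { intros. apply Hr'. pose proof (Hbox s t H H0). lra. }
  assert (Dfi : forall s t, x i <= s <= x i + h -> x k <= t <= x k + h ->
            derivable_pt_lim (fun u => f (y u t)) s (pd i f (y s t))).
  { intros s t Hs Ht. pose proof (PP_deriv n U f i (y s t) P0 Hi (HboxU s t Hs Ht)) as H.
    rewrite Hyi in H. eapply dpl_ext; [|exact H]. intro u. unfold y. now rewrite upd3_i. }
  assert (Dfk : forall s t, x i <= s <= x i + h -> x k <= t <= x k + h ->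
            derivable_pt_lim (fun u => f (y s u)) t (pd k f (y s t))).
  { intros s t Hs Ht. pose proof (PP_deriv n U f k (y s t) P0 Hk (HboxU s t Hs Ht)) as H.
    rewrite Hyk in H. eapply dpl_ext; [|exact H]. intro u. unfold y. now rewrite upd_upd. }
  assert (Dik : forall s t, x i <= s <= x i + h -> x k <= t <= x k + h ->
            derivable_pt_lim (fun u => pd i f (y s u)) t (A (y s t))).
  { intros s t Hs Ht. pose proof (PP_deriv n U (pd i f) k (y s t) Pi Hk (HboxU s t Hs Ht)) as H.
    rewrite Hyk in H. eapply dpl_ext; [|exact H]. intro u. unfold y. now rewrite upd_upd. }
  assert (Dki : forall s t, x i <= s <= x i + h -> x k <= t <= x k + h ->
            derivable_pt_lim (fun u => pd k f (y u t)) s (B (y s t))).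
  { intros s t Hs Ht. pose proof (PP_deriv n U (pd k f) i (y s t) Pk Hi (HboxU s t Hs Ht)) as H.
    rewrite Hyi in H. eapply dpl_ext; [|exact H]. intro u. unfold y. now rewrite upd3_i. }
  set (Delta := f (y (x i + h) (x k + h)) - f (y (x i + h) (x k)) - f (y (x i) (x k + h)) + f (y (x i) (x k))).
  destruct (MVT_cor2 (fun s => f (y s (x k + h)) - f (y s (x k)))
              (fun s => pd i f (y s (x k + h)) - pd i f (y s (x k))) (x i) (x i + h) ltac:(lra)) as [s1 [Hs1' Hs1]].
  { intros c Hc. apply dpl_minus; apply Dfi; lra. }
  destruct (MVT_cor2 (fun t => pd i f (y s1 t)) (fun t => A (y s1 t)) (x k) (x k + h) ltac:(lra)) as [t1 [Ht1' Ht1]].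
  { intros c Hc. apply Dik; lra. }
  destruct (MVT_cor2 (fun t => f (y (x i + h) t) - f (y (x i) t))
              (fun t => pd k f (y (x i + h) t) - pd k f (y (x i) t)) (x k) (x k + h) ltac:(lra)) as [t2 [Ht2' Ht2]].
  { intros c Hc. apply dpl_minus; apply Dfk; lra. }
  destruct (MVT_cor2 (fun s => pd k f (y s t2)) (fun s => B (y s t2)) (x i) (x i + h) ltac:(lra)) as [s2 [Hs2' Hs2]].
  { intros c Hc. apply Dki; lra. }
  assert (E1 : Delta = A (y s1 t1) * h * h).
  { cbv beta in Hs1', Ht1'. replace (x i + h - x i) with h in Hs1', Hs2' by ring. replace (x k + h - x k) with h in Ht1', Ht2' by ring.
    rewrite Ht1' in Hs1'. unfold Delta. lra. }
  assert (E2 : Delta = B (y s2 t2) * h * h).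
  { cbv beta in Hs2', Ht2'. replace (x i + h - x i) with h in Hs1', Hs2' by ring. replace (x k + h - x k) with h in Ht1', Ht2' by ring.
    rewrite Hs2' in Ht2'. unfold Delta. lra. }
  assert (EAB : A (y s1 t1) = B (y s2 t2)).
  { apply Rmult_eq_reg_r with (h * h). rewrite <- !Rmult_assoc, <- E1, <- E2. reflexivity.
    apply Rgt_not_eq. apply Rmult_lt_0_compat; lra. }
  assert (HA : Rabs (A (y s1 t1) - A x) < eps).
  { apply HdA'. apply HboxU; lra. pose proof (Hbox s1 t1 ltac:(lra) ltac:(lra)). lra. }
  assert (HB : Rabs (B (y s2 t2) - B x) < eps).
  { apply HdB'. apply HboxU; lra. pose proof (Hbox s2 t2 ltac:(lra) ltac:(lra)). lra. }
  rewrite EAB in HA.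
  pose proof (Rabs_triang (B (y s2 t2) - A x) (- (B (y s2 t2) - B x))).
  replace (B (y s2 t2) - A x + - (B (y s2 t2) - B x)) with (- (A x - B x)) in H by ring.
  rewrite Rabs_Ropp, Rabs_Ropp in H. unfold eps in *. lra.
Qed.

Section Perm.
Variable N : nat.
Notation S6 := (sumn N).
Variable Phi : nat -> nat -> nat -> nat -> R.

Lemma L_1342 : S6 (fun x => S6 (fun y => S6 (fun z => S6 (fun w => Phi x y z w)))) =
               S6 (fun x => S6 (fun z => S6 (fun w => S6 (fun y => Phi x y z w)))).
Proof.
  apply sumn_ext; intros x _.
  rewrite sumn_swap. apply sumn_ext; intros z _. apply sumn_swap.
Qed.

Lemma L_4312 : S6 (fun x => S6 (fun y => S6 (fun z => S6 (fun w => Phi x y z w)))) =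
               S6 (fun w => S6 (fun z => S6 (fun x => S6 (fun y => Phi x y z w)))).
Proof.
  transitivity (S6 (fun x => S6 (fun y => S6 (fun w => S6 (fun z => Phi x y z w))))).
  { apply sumn_ext; intros x _; apply sumn_ext; intros y _; apply sumn_swap. }
  transitivity (S6 (fun x => S6 (fun w => S6 (fun y => S6 (fun z => Phi x y z w))))).
  { apply sumn_ext; intros x _; apply sumn_swap. }
  rewrite sumn_swap.
  transitivity (S6 (fun w => S6 (fun x => S6 (fun z => S6 (fun y => Phi x y z w))))).
  { apply sumn_ext; intros w _; apply sumn_ext; intros x _; apply sumn_swap. }
  apply sumn_ext; intros w _; apply sumn_swap.
Qed.

Lemma L_4132 : S6 (fun x => S6 (fun y => S6 (fun z => S6 (fun w => Phi x y z w)))) =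
               S6 (fun w => S6 (fun x => S6 (fun z => S6 (fun y => Phi x y z w)))).
Proof.
  rewrite L_1342.
  transitivity (S6 (fun x => S6 (fun w => S6 (fun z => S6 (fun y => Phi x y z w))))).
  { apply sumn_ext; intros x _; apply sumn_swap. }
  apply sumn_swap.
Qed.

Lemma L_3412 : S6 (fun x => S6 (fun y => S6 (fun z => S6 (fun w => Phi x y z w)))) =
               S6 (fun z => S6 (fun w => S6 (fun x => S6 (fun y => Phi x y z w)))).
Proof.
  rewrite L_1342. rewrite sumn_swap.
  apply sumn_ext; intros z _. apply sumn_swap.
Qed.
End Perm.

Section Alg.
Variables (P : nat -> nat -> R) (dP : nat -> nat -> nat -> R).
Notation S6 := (sumn 6).

Definition BR (f G : nat -> R) := S6 (fun a => S6 (fun k => f a * P a k * G k)).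
Definition DK (g h : nat -> R) (g2 h2 : nat -> nat -> R) (k : nat) :=
  S6 (fun i => S6 (fun j => g2 k i * P i j * h j + g i * dP k i j * h j + g i * P i j * h2 k j)).
Definition TT (a i j : nat) := S6 (fun k => P a k * dP k i j + P i k * dP k j a + P j k * dP k a i).

Definition X1 (f h : nat -> R) (g2 : nat -> nat -> R) := S6 (fun a => S6 (fun k => S6 (fun i => S6 (fun j => f a * P a k * g2 k i * P i j * h j)))).
Definition X2 (f g h : nat -> R) := S6 (fun a => S6 (fun k => S6 (fun i => S6 (fun j => f a * P a k * g i * dP k i j * h j)))).
Definition X3 (f g : nat -> R) (h : nat -> R) (h2 : nat -> nat -> R) := S6 (fun a => S6 (fun k => S6 (fun i => S6 (fun j => f a * P a k * g i * P i j * h2 k j)))).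

Lemma br_split f g h g2 h2 : BR f (DK g h g2 h2) = X1 f h g2 + X2 f g h + X3 f g h h2.
Proof.
  unfold BR, DK, X1, X2, X3. rewrite <- !sumn_plus. apply sumn_ext; intros a _.
  rewrite <- !sumn_plus. apply sumn_ext; intros k _.
  rewrite <- sumn_scal, <- !sumn_plus. apply sumn_ext; intros i _.
  rewrite <- sumn_scal, <- !sumn_plus. apply sumn_ext; intros j _. ring.
Qed.

Hypothesis Pskew : forall a b, (a < 6)%nat -> (b < 6)%nat -> P b a = - P a b.

Lemma hess_cancel (f g h : nat -> R) h2 : (forall a b, (a < 6)%nat -> (b < 6)%nat -> h2 b a = h2 a b) ->
  X3 f g h h2 + X1 g f h2 = 0.
Proof.
  intros Hs. unfold X3, X1.
  rewrite (L_4312 6 (fun a k i j => g a * P a k * h2 k i * P i j * f j)).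
  rewrite <- !sumn_plus. apply sumn_zero; intros a Ha.
  rewrite <- !sumn_plus. apply sumn_zero; intros k Hk.
  rewrite <- !sumn_plus. apply sumn_zero; intros i Hi.
  rewrite <- !sumn_plus. apply sumn_zero; intros j Hj.
  rewrite (Pskew k a), (Hs j k) by auto. ring.
Qed.

Lemma x2_cyc f g h : X2 f g h + X2 g h f + X2 h f g =
  S6 (fun a => S6 (fun i => S6 (fun j => f a * g i * h j * TT a i j))).
Proof.
  unfold X2, TT.
  rewrite (L_1342 6 (fun a k i j => f a * P a k * g i * dP k i j * h j)).
  rewrite (L_4132 6 (fun a k i j => g a * P a k * h i * dP k i j * f j)).
  rewrite (L_3412 6 (fun a k i j => h a * P a k * f i * dP k i j * g j)).
  rewrite <- !sumn_plus. apply sumn_ext; intros a _.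
  rewrite <- !sumn_plus. apply sumn_ext; intros i _.
  rewrite <- !sumn_plus. apply sumn_ext; intros j _.
  rewrite <- !sumn_plus, <- sumn_scal. apply sumn_ext; intros k _. ring.
Qed.

Lemma jac_alg f g h f2 g2 h2 :
  (forall a b, (a < 6)%nat -> (b < 6)%nat -> f2 b a = f2 a b) ->
  (forall a b, (a < 6)%nat -> (b < 6)%nat -> g2 b a = g2 a b) ->
  (forall a b, (a < 6)%nat -> (b < 6)%nat -> h2 b a = h2 a b) ->
  BR f (DK g h g2 h2) + BR g (DK h f h2 f2) + BR h (DK f g f2 g2) =
  S6 (fun a => S6 (fun i => S6 (fun j => f a * g i * h j * TT a i j))).
Proof.
  intros Hf Hg Hh. rewrite !br_split.
  pose proof (hess_cancel f g h h2 Hh). pose proof (hess_cancel g h f f2 Hf).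
  pose proof (hess_cancel h f g g2 Hg). pose proof (x2_cyc f g h). lra.
Qed.
End Alg.

Definition PiT (A G : nat -> R) (i j : nat) : R :=
  match i, j with
  | 0%nat, 1%nat => - A 2%nat | 0%nat, 2%nat => A 1%nat | 0%nat, 4%nat => - G 2%nat | 0%nat, 5%nat => G 1%nat
  | 1%nat, 0%nat => A 2%nat | 1%nat, 2%nat => - A 0%nat | 1%nat, 3%nat => G 2%nat | 1%nat, 5%nat => - G 0%nat
  | 2%nat, 0%nat => - A 1%nat | 2%nat, 1%nat => A 0%nat | 2%nat, 3%nat => - G 1%nat | 2%nat, 4%nat => G 0%nat
  | 3%nat, 1%nat => - G 2%nat | 3%nat, 2%nat => G 1%nat
  | 4%nat, 0%nat => G 2%nat | 4%nat, 2%nat => - G 0%nat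
  | 5%nat, 0%nat => - G 1%nat | 5%nat, 1%nat => G 0%nat
  | _, _ => 0
  end.

Definition mc (mu : R3 -> R3 -> R3) (l : nat) (y : Vec) : R :=
  match l with 0%nat => c1 (mu (vM y) (vG y)) | 1%nat => c2 (mu (vM y) (vG y)) | _ => c3 (mu (vM y) (vG y)) end.

Lemma Pi_PiT mu y i j : Pi mu y i j = PiT (fun l => y l + mc mu l y) (fun l => y (3 + l)%nat) i j.
Proof.
  do 6 (destruct i as [|i]; [do 7 (destruct j as [|j]; try reflexivity)|]). reflexivity.
Qed.

Lemma PiT_cases i j : exists c l b, (l < 3)%nat /\ forall A G, PiT A G i j = c * (if b : bool then A l else G l).
Proof.
  do 6 (destruct i as [|i]; [do 7 (destruct j as [|j]; [first
    [ exists 0, 0%nat, true; split; [lia|intros; simpl; ring]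
    | exists 1, 0%nat, true; split; [lia|intros; simpl; ring]
    | exists 1, 1%nat, true; split; [lia|intros; simpl; ring]
    | exists 1, 2%nat, true; split; [lia|intros; simpl; ring]
    | exists (-1), 0%nat, true; split; [lia|intros; simpl; ring]
    | exists (-1), 1%nat, true; split; [lia|intros; simpl; ring]
    | exists (-1), 2%nat, true; split; [lia|intros; simpl; ring]
    | exists 1, 0%nat, false; split; [lia|intros; simpl; ring]
    | exists 1, 1%nat, false; split; [lia|intros; simpl; ring]
    | exists 1, 2%nat, false; split; [lia|intros; simpl; ring]
    | exists (-1), 0%nat, false; split; [lia|intros; simpl; ring]
    | exists (-1), 1%nat, false; split; [lia|intros; simpl; ring]
    | exists (-1), 2%nat, false; split; [lia|intros; simpl; ring] ]|]);
    exists 0, 0%nat, true; split; [lia|intros; simpl; ring]|]).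
  exists 0, 0%nat, true; split; [lia|intros; simpl; ring].
Qed.

Lemma PiT_skew A G a b : PiT A G b a = - PiT A G a b.
Proof.
  do 6 (destruct a as [|a]; [do 7 (destruct b as [|b]; [simpl; ring|]); simpl; ring|]).
  destruct b as [|[|[|[|[|[|b]]]]]]; simpl; ring.
Qed.

Lemma open_Omega D : open_n 3 (fun x => D (x 0%nat, x 1%nat, x 2%nat)) -> open_n 6 (Omega D).
Proof.
  intros H x Hx. destruct (H (fun j => x (3 + j)%nat) Hx) as [r [Hr Hr']].
  exists r; split; auto. intros y Hy. apply (Hr' (fun j => y (3 + j)%nat)).
  unfold distn in *. unfold sumn in *. simpl in *.
  pose proof (Rabs_pos (y 0%nat - x 0%nat)). pose proof (Rabs_pos (y 1%nat - x 1%nat)).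
  pose proof (Rabs_pos (y 2%nat - x 2%nat)). lra.
Qed.

Lemma open_DxR D : open_n 3 (fun x => D (x 0%nat, x 1%nat, x 2%nat)) -> open_n 4 (DxR D).
Proof.
  intros H x Hx. destruct (H x Hx) as [r [Hr Hr']].
  exists r; split; auto. intros y Hy. apply (Hr' y).
  unfold distn in *. unfold sumn in *. simpl in *.
  pose proof (Rabs_pos (y 3%nat - x 3%nat)). lra.
Qed.

Section Mu.
Variables (D : R3 -> Prop) (mu : R3 -> R3 -> R3).
Hypothesis HDopen : open_n 3 (fun x => D (x 0%nat, x 1%nat, x 2%nat)).
Hypothesis Hmu : smooth_mu D mu.

Lemma Om_open : open_n 6 (Omega D).
Proof. now apply open_Omega. Qed.

Lemma smooth_mc l : smooth_on 6 (Omega D) (mc mu l).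
Proof. destruct Hmu as [H1 [H2 H3]]. destruct l as [|[|l]]; auto. Qed.

Lemma smooth_Pi i j : smooth_on 6 (Omega D) (fun y => Pi mu y i j).
Proof.
  destruct (PiT_cases i j) as [c [l [b [Hl Hc]]]].
  apply (smooth_local 6 _ (fun y => c * (if b then y l + mc mu l y else y (3 + l)%nat))). apply Om_open.
  intros y _. rewrite Pi_PiT, Hc. reflexivity.
  apply smooth_mult. apply Om_open. apply smooth_const.
  destruct b. apply smooth_plus. apply Om_open. apply smooth_coord; lia. apply smooth_mc.
  apply smooth_coord; lia.
Qed.

End Mu.

Definition dpsiT (Mv gv : nat -> R) (k c : nat) : R :=
  if Nat.ltb c 3 then (if Nat.eqb (3 + c) k then 1 else 0)
  else match k with 0%nat => gv 0%nat | 1%nat => gv 1%nat | 2%nat => gv 2%nat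
                  | 3%nat => Mv 0%nat | 4%nat => Mv 1%nat | 5%nat => Mv 2%nat | _ => 0 end.

Definition LC (a i j : nat) : R :=
  match a, i, j with
  | 0%nat, 1%nat, 2%nat => 1 | 1%nat, 2%nat, 0%nat => 1 | 2%nat, 0%nat, 1%nat => 1
  | 0%nat, 2%nat, 1%nat => -1 | 2%nat, 1%nat, 0%nat => -1 | 1%nat, 0%nat, 2%nat => -1
  | _, _, _ => 0 end.

Definition Eexpr (gv mv : nat -> R) (nd : nat -> nat -> R) : R :=
  gv 0%nat * (nd 2%nat 1%nat - nd 1%nat 2%nat) + gv 1%nat * (nd 0%nat 2%nat - nd 2%nat 0%nat)
  + gv 2%nat * (nd 1%nat 0%nat - nd 0%nat 1%nat)
  + (mv 0%nat * (gv 1%nat * nd 2%nat 3%nat - gv 2%nat * nd 1%nat 3%nat)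
   + mv 1%nat * (gv 2%nat * nd 0%nat 3%nat - gv 0%nat * nd 2%nat 3%nat)
   + mv 2%nat * (gv 0%nat * nd 1%nat 3%nat - gv 1%nat * nd 0%nat 3%nat)).

Lemma TT_val (Mv gv mv : nat -> R) (nd : nat -> nat -> R) a i j :
  let dm := fun k l => sumn 4 (fun c => nd l c * dpsiT Mv gv k c) in
  TT (PiT (fun l => Mv l + mv l) gv)
     (fun k => PiT (fun l => (if Nat.eqb l k then 1 else 0) + dm k l) (fun l => if Nat.eqb (3 + l) k then 1 else 0))
     a i j = - LC a i j * Eexpr gv mv nd.
Proof.
  intros dm. unfold TT, dm. destruct a as [|[|[|[|[|[|a]]]]]]; destruct i as [|[|[|[|[|[|i]]]]]]; destruct j as [|[|[|[|[|[|j]]]]]].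
  all: unfold sumn, Eexpr; cbn; ring.
Qed.

Definition crossc (gv u : nat -> R) (c : nat) : R :=
  match c with 0%nat => gv 1%nat * u 2%nat - gv 2%nat * u 1%nat
  | 1%nat => gv 2%nat * u 0%nat - gv 0%nat * u 2%nat
  | _ => gv 0%nat * u 1%nat - gv 1%nat * u 0%nat end.

Lemma TT_cross (Mv gv mv : nat -> R) (dm : nat -> nat -> R) c l : (c < 3)%nat -> (l < 3)%nat ->
  TT (PiT (fun l => Mv l + mv l) gv)
     (fun k => PiT (fun l => (if Nat.eqb l k then 1 else 0) + dm k l) (fun l => if Nat.eqb (3 + l) k then 1 else 0))
     (3 + c) (S l mod 3) (S (S l) mod 3) = - crossc gv (fun b => dm b l) c.
Proof.
  intros Hc Hl. unfold TT.
  destruct c as [|[|[|c]]]; try lia; destruct l as [|[|[|l]]]; try lia.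
  all: unfold sumn, crossc; cbn; ring.
Qed.

Lemma dpl_coord x k j : derivable_pt_lim (fun t => upd x k t j) (x k) (if Nat.eqb j k then 1 else 0).
Proof.
  destruct (Nat.eqb_spec j k).
  - subst. apply (dpl_ext (fun t => t)). intro; now rewrite upd_same. apply dpl_id.
  - apply (dpl_ext (fun _ => x j)). intro; now rewrite upd_other. apply dpl_const.
Qed.

Section Mu2.
Variables (D : R3 -> Prop) (mu : R3 -> R3 -> R3).
Hypothesis HDopen : open_n 3 (fun x => D (x 0%nat, x 1%nat, x 2%nat)).
Hypothesis Hmu : smooth_mu D mu.

Definition dPi (x : Vec) (k i j : nat) : R := pd k (fun y => Pi mu y i j) x.

Lemma dPi_val x k i j : Omega D x -> (k < 6)%nat ->
  dPi x k i j = PiT (fun l => (if Nat.eqb l k then 1 else 0) + pd k (mc mu l) x)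
                    (fun l => if Nat.eqb (3 + l) k then 1 else 0) i j.
Proof.
  intros Hx Hk. unfold dPi.
  destruct (PiT_cases i j) as [c [l [b [Hl Hc]]]]. rewrite Hc.
  apply pd_eq. destruct b.
  - apply (dpl_ext (fun t => c * (upd x k t l + mc mu l (upd x k t)))).
    intro t. rewrite Pi_PiT, Hc. reflexivity.
    eapply dpl_eq. apply (dpl_mult (fun _ => c)). apply dpl_const.
    apply dpl_plus. apply dpl_coord.
    apply (PP_deriv 6 (Omega D) (mc mu l)); auto. apply (good_PP _ _ 0). apply smooth_good, smooth_mc; auto.
    ring.
  - apply (dpl_ext (fun t => c * (upd x k t (3 + l)%nat))).
    intro t. rewrite Pi_PiT, Hc. reflexivity.
    eapply dpl_eq. apply (dpl_mult (fun _ => c)). apply dpl_const. apply dpl_coord. ring.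
Qed.

Lemma bracket_pd g h x k : smooth_on 6 (Omega D) g -> smooth_on 6 (Omega D) h -> Omega D x -> (k < 6)%nat ->
  pd k (bracket mu g h) x =
  DK (Pi mu x) (dPi x) (fun i => pd i g x) (fun j => pd j h x)
     (fun k i => pd k (pd i g) x) (fun k j => pd k (pd j h) x) k.
Proof.
  intros Hg Hh Hx Hk. apply pd_eq. unfold bracket, DK.
  apply (dpl_sumn 6 (fun i t => sumn 6 (fun j => pd i g (upd x k t) * Pi mu (upd x k t) i j * pd j h (upd x k t)))).
  intros i Hi.
  apply (dpl_sumn 6 (fun j t => pd i g (upd x k t) * Pi mu (upd x k t) i j * pd j h (upd x k t))).
  intros j Hj.
  assert (D1 : derivable_pt_lim (fun t => pd i g (upd x k t)) (x k) (pd k (pd i g) x)).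
  { apply (PP_deriv 6 (Omega D)); auto. apply (good_PP _ _ 0). apply smooth_good, smooth_pd; auto. }
  assert (D2 : derivable_pt_lim (fun t => Pi mu (upd x k t) i j) (x k) (dPi x k i j)).
  { apply (PP_deriv 6 (Omega D) (fun y => Pi mu y i j)); auto. apply (good_PP _ _ 0). apply smooth_good, smooth_Pi; auto. }
  assert (D3 : derivable_pt_lim (fun t => pd j h (upd x k t)) (x k) (pd k (pd j h) x)).
  { apply (PP_deriv 6 (Omega D)); auto. apply (good_PP _ _ 0). apply smooth_good, smooth_pd; auto. }
  pose proof (dpl_mult _ _ _ _ _ (dpl_mult _ _ _ _ _ D1 D2) D3) as H.
  cbv beta in H. rewrite upd_id in H. eapply dpl_eq; [exact H|]. ring.
Qed.

Lemma jac_formula f g h x : smooth_on 6 (Omega D) f -> smooth_on 6 (Omega D) g -> smooth_on 6 (Omega D) h ->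
  Omega D x ->
  bracket mu f (bracket mu g h) x + bracket mu g (bracket mu h f) x + bracket mu h (bracket mu f g) x =
  sumn 6 (fun a => sumn 6 (fun i => sumn 6 (fun j =>
     pd a f x * pd i g x * pd j h x * TT (Pi mu x) (dPi x) a i j))).
Proof.
  intros Hf Hg Hh Hx.
  assert (Hop := Om_open D HDopen).
  assert (Sym : forall u, smooth_on 6 (Omega D) u -> forall a b, (a < 6)%nat -> (b < 6)%nat ->
             pd b (pd a u) x = pd a (pd b u) x).
  { intros u Hu a b Ha Hb. apply (schwarz 6 (Omega D)); auto. now apply smooth_good. }
  assert (E : forall u v w, smooth_on 6 (Omega D) u -> smooth_on 6 (Omega D) v -> smooth_on 6 (Omega D) w ->
     bracket mu u (bracket mu v w) x =
     BR (Pi mu x) (fun a => pd a u x)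
        (DK (Pi mu x) (dPi x) (fun i => pd i v x) (fun j => pd j w x)
           (fun k i => pd k (pd i v) x) (fun k j => pd k (pd j w) x))).
  { intros u v w Hu Hv Hw. unfold bracket at 1, BR. apply sumn_ext; intros a Ha. apply sumn_ext; intros k Hk.
    rewrite bracket_pd; auto. }
  rewrite !E; auto.
  apply jac_alg.
  - intros a b Ha Hb. rewrite !Pi_PiT. apply PiT_skew.
  - intros; apply Sym; auto.
  - intros; apply Sym; auto.
  - intros; apply Sym; auto.
Qed.

End Mu2.

Lemma sumn_delta2 n a F : (a < n)%nat -> sumn n (fun d => (if Nat.eqb a d then 1 else 0) * F d) = F a.
Proof.
  intro H. rewrite <- (sumn_delta n a F H). apply sumn_ext; intros.
  destruct (Nat.eqb_spec a i); destruct (Nat.eqb_spec i a); auto; lia.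
Qed.

Lemma sum3_delta (x : Vec) a0 i0 j0 (T : nat -> nat -> nat -> R) : (a0 < 6)%nat -> (i0 < 6)%nat -> (j0 < 6)%nat ->
  sumn 6 (fun a => sumn 6 (fun i => sumn 6 (fun j =>
     pd a (fun y => y a0) x * pd i (fun y => y i0) x * pd j (fun y => y j0) x * T a i j))) = T a0 i0 j0.
Proof.
  intros Ha Hi Hj.
  transitivity (sumn 6 (fun a => (if Nat.eqb a0 a then 1 else 0) * sumn 6 (fun i => (if Nat.eqb i0 i then 1 else 0) *
                  sumn 6 (fun j => (if Nat.eqb j0 j then 1 else 0) * T a i j)))).
  { apply sumn_ext; intros a _. rewrite <- sumn_scal. apply sumn_ext; intros i _.
    rewrite <- sumn_scal, <- sumn_scal. apply sumn_ext; intros j _. rewrite !pd_coord. ring. }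
  rewrite sumn_delta2 by auto. rewrite sumn_delta2 by auto. rewrite sumn_delta2 by auto. reflexivity.
Qed.

Lemma PiT_ext A G A' G' i j : (forall l, (l < 3)%nat -> A l = A' l) -> (forall l, (l < 3)%nat -> G l = G' l) ->
  PiT A G i j = PiT A' G' i j.
Proof.
  intros HA HG. destruct (PiT_cases i j) as [c [l [b [Hl Hc]]]]. rewrite !Hc.
  destruct b; [rewrite HA|rewrite HG]; auto.
Qed.

Section Mu3.
Variables (D : R3 -> Prop) (mu : R3 -> R3 -> R3).
Hypothesis HDopen : open_n 3 (fun x => D (x 0%nat, x 1%nat, x 2%nat)).
Hypothesis Hmu : smooth_mu D mu.

Lemma TT_bridge x (dme : nat -> nat -> R) a i j : Omega D x ->
  (forall k l, (k < 6)%nat -> (l < 3)%nat -> pd k (mc mu l) x = dme k l) ->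
  TT (Pi mu x) (dPi mu x) a i j =
  TT (PiT (fun l => x l + mc mu l x) (fun l => x (3 + l)%nat))
     (fun k => PiT (fun l => (if Nat.eqb l k then 1 else 0) + dme k l) (fun l => if Nat.eqb (3 + l) k then 1 else 0)) a i j.
Proof.
  intros Hx Hd. unfold TT. apply sumn_ext; intros k Hk.
  rewrite !Pi_PiT, !(dPi_val D mu Hmu) by auto.
  rewrite !(PiT_ext (fun l => (if Nat.eqb l k then 1 else 0) + pd k (mc mu l) x) (fun l => if Nat.eqb (3 + l) k then 1 else 0)
                    (fun l => (if Nat.eqb l k then 1 else 0) + dme k l) (fun l => if Nat.eqb (3 + l) k then 1 else 0)).
  reflexivity. all: intros; try rewrite Hd; auto.
Qed.

Lemma jac_coord x a0 i0 j0 : is_Poisson D mu -> Omega D x -> (a0 < 6)%nat -> (i0 < 6)%nat -> (j0 < 6)%nat ->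
  TT (Pi mu x) (dPi mu x) a0 i0 j0 = 0.
Proof.
  intros HP Hx Ha Hi Hj.
  pose proof (HP (fun y => y a0) (fun y => y i0) (fun y => y j0)
     (smooth_coord 6 _ a0 Ha) (smooth_coord 6 _ i0 Hi) (smooth_coord 6 _ j0 Hj) x Hx) as H.
  rewrite (jac_formula D mu HDopen Hmu) in H; try apply smooth_coord; auto.
  rewrite sum3_delta in H; auto.
Qed.

Lemma cross_zero x c l : is_Poisson D mu -> Omega D x -> (c < 3)%nat -> (l < 3)%nat ->
  crossc (fun l => x (3 + l)%nat) (fun b => pd b (mc mu l) x) c = 0.
Proof.
  intros HP Hx Hc Hl.
  pose proof (jac_coord x (3 + c) (S l mod 3) (S (S l) mod 3) HP Hx ltac:(lia)
     ltac:(pose proof (Nat.mod_upper_bound (S l) 3); lia) ltac:(pose proof (Nat.mod_upper_bound (S (S l)) 3); lia)) as H.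
  rewrite (TT_bridge x (fun k l => pd k (mc mu l) x)) in H; auto.
  rewrite (TT_cross (fun l => x l) (fun l => x (3 + l)%nat) (fun l => mc mu l x)) in H; auto. lra.
Qed.

End Mu3.

Definition psi (y : Vec) : Vec := pack4 (vG y) (dot3 (vM y) (vG y)).

Lemma psi_smooth U c : open_n 6 U -> (c < 4)%nat -> smooth_on 6 U (fun y => psi y c).
Proof.
  intros Hop Hc. destruct c as [|[|[|[|c]]]]; try lia.
  - apply (smooth_coord 6 U 3); lia.
  - apply (smooth_coord 6 U 4); lia.
  - apply (smooth_coord 6 U 5); lia.
  - change (smooth_on 6 U (fun y => y 0%nat * y 3%nat + y 1%nat * y 4%nat + y 2%nat * y 5%nat)).
    repeat apply smooth_plus; auto; apply smooth_mult; auto; apply smooth_coord; lia.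
Qed.

Lemma psi_pd x k c : (c < 4)%nat -> (k < 6)%nat ->
  pd k (fun y => psi y c) x = dpsiT (fun l => x l) (fun l => x (3 + l)%nat) k c.
Proof.
  intros Hc Hk. destruct c as [|[|[|[|c]]]]; try lia.
  - change (pd k (fun y => y 3%nat) x = dpsiT (fun l => x l) (fun l => x (3 + l)%nat) k 0). rewrite pd_coord. reflexivity.
  - change (pd k (fun y => y 4%nat) x = dpsiT (fun l => x l) (fun l => x (3 + l)%nat) k 1). rewrite pd_coord. reflexivity.
  - change (pd k (fun y => y 5%nat) x = dpsiT (fun l => x l) (fun l => x (3 + l)%nat) k 2). rewrite pd_coord. reflexivity.
  - change (pd k (fun y => y 0%nat * y 3%nat + y 1%nat * y 4%nat + y 2%nat * y 5%nat) x =
            dpsiT (fun l => x l) (fun l => x (3 + l)%nat) k 3).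
    apply pd_eq.
    eapply dpl_eq. apply dpl_plus. apply dpl_plus.
    apply (dpl_mult (fun t => upd x k t 0%nat) (fun t => upd x k t 3%nat)); apply dpl_coord.
    apply (dpl_mult (fun t => upd x k t 1%nat) (fun t => upd x k t 4%nat)); apply dpl_coord.
    apply (dpl_mult (fun t => upd x k t 2%nat) (fun t => upd x k t 5%nat)); apply dpl_coord.
    rewrite !upd_id.
    destruct k as [|[|[|[|[|[|k]]]]]]; try lia; cbn; ring.
Qed.

Section Nu.
Variables (D : R3 -> Prop) (mu : R3 -> R3 -> R3) (nu : R3 -> R -> R3).
Hypothesis HDopen : open_n 3 (fun x => D (x 0%nat, x 1%nat, x 2%nat)).
Hypothesis Hmu : smooth_mu D mu.
Hypothesis Hnu : smooth_nu D nu.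
Hypothesis Hrel : forall M g, D g -> mu M g = nu g (dot3 M g).

Lemma smooth_nu4 l : smooth_on 4 (DxR D) (nu4 nu l).
Proof.
  destruct Hnu as [H0 [H1 H2]]. destruct l as [|[|l]]; auto.
Qed.

Lemma mc_rel y l : Omega D y -> mc mu l y = nu4 nu l (psi y).
Proof.
  intro Hy. unfold mc, psi. rewrite (Hrel (vM y) (vG y) Hy).
  destruct l as [|[|l]]; reflexivity.
Qed.

Lemma mc_pd x k l : Omega D x -> (k < 6)%nat ->
  pd k (mc mu l) x = sumn 4 (fun c => pd c (nu4 nu l) (psi x) * dpsiT (fun l => x l) (fun l => x (3 + l)%nat) k c).
Proof.
  intros Hx Hk.
  rewrite (pd_local 6 (Omega D) (mc mu l) (fun y => nu4 nu l (psi y)) k (Om_open D HDopen) (fun y Hy => mc_rel y l Hy) x Hx).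
  assert (Hc0 : forall y j, (4 <= j)%nat -> psi y j = 0).
  { intros y j Hj. unfold psi, pack4. destruct j as [|[|[|[|j]]]]; auto; lia. }
  assert (HF : good 4 (DxR D) 1 (nu4 nu l)) by apply smooth_good, smooth_nu4.
  rewrite (comp_pd 6 4 (Omega D) (DxR D) psi (open_DxR D HDopen)
             (fun j Hj => psi_smooth _ j (Om_open D HDopen) Hj) (fun y Hy => Hy) Hc0 (nu4 nu l) k x HF Hk Hx).
  apply sumn_ext; intros c Hc. rewrite psi_pd; auto; lia.
Qed.

Lemma E_is_jac x : Omega D x ->
  Eexpr (fun l => x (3 + l)%nat) (fun l => mc mu l x) (fun l c => pd c (nu4 nu l) (psi x)) =
  dot3 (vG x) (curl_g nu (vG x) (dot3 (vM x) (vG x)))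
  + dot3 (nu (vG x) (dot3 (vM x) (vG x))) (cross3 (vG x) (ds_nu nu (vG x) (dot3 (vM x) (vG x)))).
Proof.
  intro Hx. rewrite <- (Hrel (vM x) (vG x) Hx).
  unfold Eexpr, mc, curl_g, ds_nu, psi, dot3, cross3. cbn [c1 c2 c3 fst snd vG vM Nat.add]. ring.
Qed.

Lemma TT_zero x a i j : Omega D x -> jacobi_condition D nu -> (a < 6)%nat -> (i < 6)%nat -> (j < 6)%nat ->
  TT (Pi mu x) (dPi mu x) a i j = 0.
Proof.
  intros Hx HJ Ha Hi Hj.
  rewrite (TT_bridge D mu Hmu x (fun k l => sumn 4 (fun c => pd c (nu4 nu l) (psi x) * dpsiT (fun l => x l) (fun l => x (3 + l)%nat) k c))); auto.
  2: intros; apply mc_pd; auto.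
  rewrite (TT_val (fun l => x l) (fun l => x (3 + l)%nat) (fun l => mc mu l x) (fun l c => pd c (nu4 nu l) (psi x))).
  rewrite E_is_jac, HJ; auto. ring.
Qed.

Lemma backward : jacobi_condition D nu -> is_Poisson D mu.
Proof.
  intros HJ f g h Hf Hg Hh x Hx.
  rewrite (jac_formula D mu HDopen Hmu); auto.
  apply sumn_zero; intros a Ha. apply sumn_zero; intros i Hi. apply sumn_zero; intros j Hj.
  rewrite TT_zero; auto. ring.
Qed.

Lemma E_from_poisson x : Omega D x -> is_Poisson D mu ->
  dot3 (vG x) (curl_g nu (vG x) (dot3 (vM x) (vG x)))
  + dot3 (nu (vG x) (dot3 (vM x) (vG x))) (cross3 (vG x) (ds_nu nu (vG x) (dot3 (vM x) (vG x)))) = 0.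
Proof.
  intros Hx HP. rewrite <- E_is_jac; auto.
  pose proof (jac_coord D mu HDopen Hmu x 0 1 2 HP Hx ltac:(lia) ltac:(lia) ltac:(lia)) as H.
  rewrite (TT_bridge D mu Hmu x (fun k l => sumn 4 (fun c => pd c (nu4 nu l) (psi x) * dpsiT (fun l => x l) (fun l => x (3 + l)%nat) k c))) in H; auto.
  2: intros; apply mc_pd; auto.
  rewrite (TT_val (fun l => x l) (fun l => x (3 + l)%nat) (fun l => mc mu l x) (fun l c => pd c (nu4 nu l) (psi x))) in H.
  unfold LC in H. lra.
Qed.

End Nu.

Definition mkx (M g : R3) : Vec := fun j =>
  match j with 0%nat => c1 M | 1%nat => c2 M | 2%nat => c3 M | 3%nat => c1 g | 4%nat => c2 g | 5%nat => c3 g | _ => 0 end.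

Definition scl (a : R) (g : R3) : R3 := (a * c1 g, a * c2 g, a * c3 g).

Definition nuF (mu : R3 -> R3 -> R3) (g : R3) (s : R) : R3 := mu (scl (s / dot3 g g) g) g.

Definition qf (y : Vec) : R := dot3 (y 0%nat, y 1%nat, y 2%nat) (y 0%nat, y 1%nat, y 2%nat).

Definition phiF (y : Vec) : Vec := fun j =>
  match j with 0%nat => y 3%nat / qf y * y 0%nat | 1%nat => y 3%nat / qf y * y 1%nat | 2%nat => y 3%nat / qf y * y 2%nat
  | 3%nat => y 0%nat | 4%nat => y 1%nat | 5%nat => y 2%nat | _ => 0 end.

Lemma dot3_self_pos g : g <> zero3 -> dot3 g g <> 0.
Proof.
  destruct g as [[a b] c]. unfold dot3, zero3, c1, c2, c3; simpl. intros H E. apply H.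
  pose proof (Rle_0_sqr a). pose proof (Rle_0_sqr b). pose proof (Rle_0_sqr c). unfold Rsqr in *.
  assert (a * a = 0) by lra. assert (b * b = 0) by lra. assert (c * c = 0) by lra.
  apply Rmult_integral in H3. apply Rmult_integral in H4. apply Rmult_integral in H5.
  destruct H3, H4, H5; subst; reflexivity.
Qed.

Lemma R3_eq (u v : R3) : c1 u = c1 v -> c2 u = c2 v -> c3 u = c3 v -> u = v.
Proof. destruct u as [[a b] c], v as [[a' b'] c']. unfold c1, c2, c3; simpl. intros; subst; reflexivity. Qed.

Section Fwd.
Variables (D : R3 -> Prop) (mu : R3 -> R3 -> R3).
Hypothesis HDopen : open_n 3 (fun x => D (x 0%nat, x 1%nat, x 2%nat)).
Hypothesis HD0 : forall g, D g -> g <> zero3.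
Hypothesis Hmu : smooth_mu D mu.

Lemma smooth_invq : smooth_on 4 (DxR D) (fun y => / qf y).
Proof.
  pose proof (smooth_comp 4 1 (DxR D) V1 (fun y j => if Nat.eqb j 0 then qf y else 0)
    (open_DxR D HDopen) V1_open) as H.
  refine (H _ _ _ (fun z => / z 0%nat) _); clear H.
  - intros j Hj. assert (j = 0%nat) by lia. subst. cbn.
    change (smooth_on 4 (DxR D) (fun y => y 0%nat * y 0%nat + y 1%nat * y 1%nat + y 2%nat * y 2%nat)).
    pose proof (open_DxR D HDopen).
    repeat apply smooth_plus; auto; apply smooth_mult; auto; apply smooth_coord; lia.
  - intros y Hy. unfold V1. cbn. apply dot3_self_pos. apply HD0. exact Hy.
  - intros y j Hj. destruct j; [lia|reflexivity].
  - apply smooth_inv.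
Qed.

Lemma smooth_nuF : smooth_nu D (nuF mu).
Proof.
  assert (HU := open_DxR D HDopen).
  assert (Hphi : forall j, (j < 6)%nat -> smooth_on 4 (DxR D) (fun y => phiF y j)).
  { intros j Hj. destruct j as [|[|[|[|[|[|j]]]]]]; try lia; cbn [phiF].
    1-3: unfold Rdiv; apply smooth_mult; auto; [apply smooth_mult; auto; [apply smooth_coord; lia|apply smooth_invq]|apply smooth_coord; lia].
    all: apply smooth_coord; lia. }
  assert (Hl : forall l, smooth_on 4 (DxR D) (fun y => mc mu l (phiF y))).
  { intro l. apply (smooth_comp 4 6 (DxR D) (Omega D) phiF HU (Om_open D HDopen) Hphi).
    - intros y Hy. exact Hy.
    - intros y j Hj. do 6 (destruct j as [|j]; [lia|]). reflexivity.
    - apply smooth_mc; auto. }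
  split; [|split]; [apply (Hl 0%nat)|apply (Hl 1%nat)|apply (Hl 2%nat)].
Qed.


Lemma alg_perp (g1 g2 g3 v1 v2 v3 w1 w2 w3 : R) :
  g1 * g1 + g2 * g2 + g3 * g3 <> 0 -> g1 * w1 + g2 * w2 + g3 * w3 = 0 ->
  g2 * v3 - g3 * v2 = 0 -> g3 * v1 - g1 * v3 = 0 -> g1 * v2 - g2 * v1 = 0 ->
  v1 * w1 + v2 * w2 + v3 * w3 = 0.
Proof.
  intros Hq Hw C1 C2 C3.
  assert (E : (g1 * g1 + g2 * g2 + g3 * g3) * (v1 * w1 + v2 * w2 + v3 * w3) =
    (g1 * v1 + g2 * v2 + g3 * v3) * (g1 * w1 + g2 * w2 + g3 * w3)
    + (g2 * v3 - g3 * v2) * (g2 * w3 - g3 * w2) + (g3 * v1 - g1 * v3) * (g3 * w1 - g1 * w3)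
    + (g1 * v2 - g2 * v1) * (g1 * w2 - g2 * w1)) by ring.
  rewrite Hw, C1, C2, C3 in E. assert (E' : (g1 * g1 + g2 * g2 + g3 * g3) * (v1 * w1 + v2 * w2 + v3 * w3) = 0) by lra.
  apply Rmult_integral in E'. destruct E'; [contradiction|auto].
Qed.

Hypothesis HP : is_Poisson D mu.

Lemma factor M g : D g -> mu M g = nuF mu g (dot3 M g).
Proof.
  intros Hg. assert (Hq : dot3 g g <> 0) by (apply dot3_self_pos; auto).
  unfold nuF. set (s := dot3 M g). set (M' := scl (s / dot3 g g) g).
  set (xt := fun t => mkx (c1 M' + t * (c1 M - c1 M'), c2 M' + t * (c2 M - c2 M'), c3 M' + t * (c3 M - c3 M')) g).
  assert (HxO : forall t, Omega D (xt t)).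
  { intro t. unfold Omega, xt, mkx, vG. destruct g as [[g1 g2] g3]. exact Hg. }
  assert (Hop := Om_open D HDopen).
  set (dc := fun k => match k with 0%nat => c1 M - c1 M' | 1%nat => c2 M - c2 M' | 2%nat => c3 M - c3 M' | _ => 0 end).
  assert (Hw : c1 g * dc 0%nat + c2 g * dc 1%nat + c3 g * dc 2%nat = 0).
  { unfold dc, M', scl, s. unfold dot3 in *. cbn [c1 c2 c3 fst snd]. field. exact Hq. }
  assert (Hconst : forall l, (l < 3)%nat -> mc mu l (xt 1) = mc mu l (xt 0)).
  { intros l Hl.
    assert (Hd : forall t, derivable_pt_lim (fun t => mc mu l (xt t)) t 0).
    { intro t.
      pose proof (chain 6 (Omega D) (mc mu l) xt t dc Hop) as H.
      eapply dpl_eq; [apply H|].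
      - intros k y Hk Hy. apply (PP_deriv 6 (Omega D)); auto. apply (good_PP _ _ 0), smooth_good, smooth_mc; auto.
      - intros k Hk. apply (good_PP 6 (Omega D) 0). apply smooth_good, smooth_pd; auto. apply smooth_mc; auto.
      - apply HxO.
      - intros t' j Hj. unfold xt, mkx. do 6 (destruct j as [|j]; [lia|]). reflexivity.
      - intros k Hk. unfold xt, mkx, dc. destruct k as [|[|[|[|[|[|k]]]]]]; try lia; cbn [c1 c2 c3 fst snd].
        1-3: eapply dpl_eq; [apply dpl_plus; [apply dpl_const|apply (dpl_mult (fun t => t) (fun _ => _)); [apply dpl_id|apply dpl_const]]|]; ring.
        all: apply dpl_const.
      - unfold sumn. cbn [map seq fold_right]. unfold dc.
        pose proof (cross_zero D mu HDopen Hmu (xt t) 0 l HP (HxO t) ltac:(lia) Hl) as C0.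
        pose proof (cross_zero D mu HDopen Hmu (xt t) 1 l HP (HxO t) ltac:(lia) Hl) as C1.
        pose proof (cross_zero D mu HDopen Hmu (xt t) 2 l HP (HxO t) ltac:(lia) Hl) as C2.
        unfold crossc in C0, C1, C2. cbv beta in C0, C1, C2. cbn [Nat.add] in C0, C1, C2.
        change (xt t 3%nat) with (c1 g) in C0, C1, C2. change (xt t 4%nat) with (c2 g) in C0, C1, C2.
        change (xt t 5%nat) with (c3 g) in C0, C1, C2.
        unfold dot3 in Hq.
        pose proof (alg_perp (c1 g) (c2 g) (c3 g) _ _ _ _ _ _ Hq Hw C0 C1 C2). unfold dc in H0. lra. }
    destruct (MVT_cor2 (fun t => mc mu l (xt t)) (fun _ => 0) 0 1 ltac:(lra) (fun c _ => Hd c)) as [c [Hc _]].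
    lra. }
  assert (HvM1 : vM (xt 1) = M).
  { unfold xt, mkx, vM. destruct M as [[m1 m2] m3]. apply R3_eq; cbn [c1 c2 c3 fst snd]; ring. }
  assert (HvM0 : vM (xt 0) = M').
  { unfold xt, mkx, vM. apply R3_eq; cbn [c1 c2 c3 fst snd]; ring. }
  assert (HvG : forall t, vG (xt t) = g).
  { intro t. unfold xt, mkx, vG. destruct g as [[g1 g2] g3]. reflexivity. }
  pose proof (Hconst 0%nat ltac:(lia)) as E0. pose proof (Hconst 1%nat ltac:(lia)) as E1.
  pose proof (Hconst 2%nat ltac:(lia)) as E2. unfold mc in E0, E1, E2.
  rewrite HvM1, HvM0, !HvG in E0, E1, E2.
  apply R3_eq; auto.
Qed.

Lemma jac_nuF : jacobi_condition D (nuF mu).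
Proof.
  intros g s Hg. assert (Hq : dot3 g g <> 0) by (apply dot3_self_pos; auto).
  set (x := mkx (scl (s / dot3 g g) g) g).
  assert (Hx : Omega D x) by (unfold Omega, x, mkx, vG; destruct g as [[g1 g2] g3]; exact Hg).
  pose proof (E_from_poisson D mu (nuF mu) HDopen Hmu smooth_nuF factor x Hx HP) as H.
  replace (vG x) with g in H by (unfold x, mkx, vG; destruct g as [[g1 g2] g3]; reflexivity).
  replace (dot3 (vM x) g) with s in H. exact H.
  unfold x, mkx, vM, scl. unfold dot3 in *. destruct g as [[g1 g2] g3]. cbn [c1 c2 c3 fst snd] in *. field. exact Hq.
Qed.

End Fwd.


Theorem mainTheorem1 (D : R3 -> Prop) (mu : R3 -> R3 -> R3)
  (HDopen : open_n 3 (fun x => D (x 0%nat, x 1%nat, x 2%nat)))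
  (HD0 : forall g, D g -> g <> zero3)
  (Hmu : smooth_mu D mu) :
  is_Poisson D mu <->
  exists nu : R3 -> R -> R3,
    smooth_nu D nu /\
    (forall M g, D g -> mu M g = nu g (dot3 M g)) /\
    jacobi_condition D nu.
Proof.
  split.
  - intro HP. exists (nuF mu). split; [|split].
    + apply (smooth_nuF D mu); auto.
    + intros M g Hg. apply (factor D mu); auto.
    + apply (jac_nuF D mu); auto.
  - intros [nu [Hnu [Hrel HJ]]]. apply (backward D mu nu); auto.
Qed.
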